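(* Let $f$ be a function on $\Omega_+$ depending only on $\zeta_0,\dots,\zeta_{m-1}$ ($m\ge1$), written as $f=\sum_{\gamma\subset\{0,\dots,m-1\}}f_\gamma\Psi_\gamma$. Then $G^{(f)}\in\mathcal H_M$ and $$\|G^{(f)}\|_M\le C\max_{\gamma\subset\{0,\dots,m-1\}}|f_\gamma|\,(1+\mu_* )^m,$$ where $C>0$ is a constant independent of $f$ and $m$.
   Context: Model. Fix $d\ge1$. $(X_t,\xi_t)_{t\in\mathbb{Z}_+}$ is a Markov chain with $X_t\in\mathbb{Z}^d$, $X_0=0$, $\xi_t\in\Omega:=\{-1,+1\}^{\mathbb{Z}^d}$. Given $X_t=x,\xi_t=\bar\xi$, the next position and the next environment are conditionally independent; $P(X_{t+1}=x+u\mid X_t=x,\xi_t=\bar\xi)=P_0(u)+\epsilon c(u)\bar\xi(x)$, where $\epsilon>0$, $P_0$ is an even, finite-range probability distribution on $\mathbb{Z}^d$ with $|\sum_u P_0(u)e^{i(\lambda,u)}|=1$ iff $\lambda=0$ and such that $1/\tilde p_0(\lambda)$ (with $\tilde p_0(\lambda)=\sum_u P_0(u)e^{i(\lambda,u)}$) has absolutely summable Fourier coefficients, and $c$ is an odd finite-range real function with $P_0(u)\pm\epsilon c(u)\in[0,1)$. Given $X_t=x,\xi_t=\bar\xi$, the values $\xi_{t+1}(y)$, $y\in\mathbb{Z}^d$, are independent with $P(\xi_{t+1}(y)=s)=Q_0(\bar\xi(y),s)$ if $y\ne x$ and $Q_1(\bar\xi(y),s)$ if $y=x$, where $Q_0,Q_1$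 are symmetric $2\times2$ stochastic matrices, $Q_0$ has eigenvalues $1,\mu$ with $0<|\mu|<1$, and $Q_1-Q_0=O(\epsilon)$. The environment seen from the walk, $\eta_t(x)=\xi_t(X_t+x)$, is a Markov chain on $\Omega$ with stochastic operator $(\mathcal T f)(\bar\eta)=\mathcal E[f(\eta_{t+1})\mid\eta_t=\bar\eta]$. $\Pi_0$ is the product of uniform measures on $\{\pm1\}$. For finite $\Gamma\subset\mathbb{Z}^d$ let $\Phi_\Gamma(\eta)=\prod_{x\in\Gamma}\eta(x)$, $\Phi_\emptyset=1$; each $f\in L^2(\Omega,\Pi_0)$ is written $f=\sum_\Gamma f_\Gamma\Phi_\Gamma$. For a fixed $M>1$, $\mathcal H_M=\{f:\|f\|_M:=\sum_\Gamma|f_\Gamma|M^{|\Gamma|}<\infty\}$. Standing assumptions (valid for $\epsilon,|\mu|$ small): $\mathcal T$ maps $\mathcal H_M$ into itself; the chain $(\eta_t)$ has an invariant probability measure $\Pi$, absolutely continuous w.r.t. $\Pi_0$ with bounded density; there is $\bar\mu\in(0,1)$ with $\|\mathcal T f\|_M\le\bar\mu\|f\|_M$ for all $f\in\widehat{\mathcal H}_M:=\{f\in\mathcal H_M:\int f\,d\Pi=0\}$. The dynamics and $\Pi$ are invariant under the global spin flip $\eta\mapsto-\eta$. Path space notation: $\widehat\Omega=\{\pm1\}^{\mathbb{Z}^d\times\mathbb{Z}_+}$; $\mathcal P_\Pi$ is the law of $(\eta_t)_{t\ge0}$ with $\eta_0\sim\Pi$; $\mathfrak M_{t_0}^{t_1}$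 is the $\sigma$-algebra generated by $\eta_{t_0},\dots,\eta_{t_1}$, $\mathfrak M_t=\mathfrak M_t^t$. For a bounded measurable function $F$ on $\widehat\Omega$, $G^{(F)}(\eta):=\mathcal E[F\mid\mathfrak M_0]$ viewed as a function of $\eta_0=\eta\in\Omega$ (the expectation of $F$ for the chain started at $\eta$). $\zeta_t:=\eta_t(0)$, $\widehat\zeta=(\zeta_t)_{t\ge0}\in\Omega_+:=\{\pm1\}^{\mathbb{Z}_+}$; a function $f$ on $\Omega_+$ is identified with the function $f(\widehat\zeta)$ on $\widehat\Omega$. Walsh functions: $\Psi_\gamma(\widehat\zeta)=\prod_{t\in\gamma}\zeta_t$ for finite $\gamma\subset\mathbb{Z}_+$, $\Psi_\emptyset=1$. $\mu_*:=M\sqrt{\bar\mu(1+2\bar\mu)}$. *)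

(* Defs.v *)
From Stdlib Require Import Reals Lra List ZArith Permutation.
Import ListNotations.
Open Scope R_scope.

Definition Site := list Z.
Definition site_eq_dec : forall x y : Site, {x = y} + {x <> y} := list_eq_dec Z.eq_dec.

Fixpoint vadd (x y : Site) : Site :=
  match x, y with
  | a :: x', b :: y' => (a + b)%Z :: vadd x' y'
  | _, _ => []
  end.
Definition vneg (x : Site) : Site := map Z.opp x.
Definition vsub (x y : Site) : Site := vadd x (vneg y).
Definition origin (d : nat) : Site := repeat 0%Z d.

Definition valid_site (d : nat) (x : Site) : Prop := length x = d.
Definition in_box (K : nat) (x : Site) : Prop :=
  Forall (fun z => (Z.abs z <= Z.of_nat K)%Z) x.

Definition lsum {A : Type} (f : A -> R) (l : list A) : R :=
  fold_right (fun a r => f a + r) 0 l.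
Definition lprod {A : Type} (f : A -> R) (l : list A) : R :=
  fold_right (fun a r => f a * r) 1 l.

Definition zrange (K : nat) : list Z :=
  map (fun n => (Z.of_nat n - Z.of_nat K)%Z) (seq 0 (2 * K + 1)).
Fixpoint box (d K : nat) : list Site :=
  match d with
  | O => [[]]
  | S d' => flat_map (fun z => map (cons z) (box d' K)) (zrange K)
  end.

Fixpoint subsets {A : Type} (l : list A) : list (list A) :=
  match l with
  | [] => [[]]
  | a :: l' => subsets l' ++ map (cons a) (subsets l')
  end.

Definition sg (b : bool) : R := if b then 1 else -1.

Definition Config := Site -> bool.
Definition upd (s : Config) (y : Site) (b : bool) : Config :=
  fun x => if site_eq_dec x y then b else s x.
(* all configurations on a finite window L (value false outside L) *)
Fixpoint configs (L : list Site) : list Config :=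
  match L with
  | [] => [fun _ => false]
  | y :: L' => flat_map (fun s => [upd s y true; upd s y false]) (configs L')
  end.

Definition depends_on (L : list Site) (g : Config -> R) : Prop :=
  forall s s', (forall x, In x L -> s x = s' x) -> g s = g s'.

Definition Phi (G : list Site) (s : Config) : R := lprod (fun x => sg (s x)) G.
(* Fourier coefficient g_Gamma in L^2(Pi_0), for g depending only on window L *)
Definition fcoef (L : list Site) (g : Config -> R) (G : list Site) : R :=
  (/ 2) ^ length L * lsum (fun s => g s * Phi G s) (configs L).
Definition normM (M : R) (L : list Site) (g : Config -> R) : R :=
  lsum (fun G => Rabs (fcoef L g G) * M ^ length G) (subsets L).

Definition dotR (l : list R) (u : Site) : R :=
  fold_right Rplus 0 (map (fun p => fst p * IZR (snd p)) (combine l u)).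

Definition sym_stoch (Q : bool -> bool -> R) : Prop :=
  (forall s s', 0 <= Q s s') /\ (forall s, Q s true + Q s false = 1) /\
  Q true false = Q false true.

(* the nontrivial eigenvalue mu of the symmetric 2x2 stochastic matrix Q0 *)
Definition mu_of (Q0 : bool -> bool -> R) : R := Q0 true true - Q0 true false.

Definition model_hyp (d : nat) (U : list Site) (Rr : nat) (P0 c : Site -> R)
    (eps : R) (Q0 Q1 : bool -> bool -> R) : Prop :=
  (1 <= d)%nat /\
  NoDup U /\ (forall u, In u U -> valid_site d u /\ in_box Rr u) /\
  (forall u, ~ In u U -> P0 u = 0 /\ c u = 0) /\
  (forall u, 0 <= P0 u) /\ lsum P0 U = 1 /\ (forall u, P0 (vneg u) = P0 u) /\
  (* |p0~(lambda)| = 1 iff lambda = 0 (lambda on the torus (-pi,pi]^d) *)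
  (forall lam : list R, length lam = d -> Forall (fun a => - PI < a <= PI) lam ->
     (Rsqr (lsum (fun u => P0 u * cos (dotR lam u)) U) +
      Rsqr (lsum (fun u => P0 u * sin (dotR lam u)) U) = 1
      <-> Forall (fun a => a = 0) lam)) /\
  (* 1/p0~ has absolutely summable Fourier coefficients a_k:
     a in l^1(Z^d) and p0~ * (sum_k a_k e^{i(lambda,k)}) = 1, i.e. P0 * a = delta_0 *)
  (exists a : Site -> R,
     (exists B, forall L, NoDup L -> Forall (valid_site d) L ->
        lsum (fun k => Rabs (a k)) L <= B) /\
     (forall x, valid_site d x ->
        lsum (fun u => P0 u * a (vsub x u)) U =
        if site_eq_dec x (origin d) then 1 else 0)) /\
  (forall u, c (vneg u) = - c u) /\ 0 < eps /\
  (forall u, 0 <= P0 u + eps * c u < 1 /\ 0 <= P0 u - eps * c u < 1) /\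
  sym_stoch Q0 /\ sym_stoch Q1 /\ 0 < Rabs (mu_of Q0) < 1.

(* ---------- the operator T of the environment seen from the walk ----------
   (T g)(eta) = E[g(eta_1) | eta_0 = eta], for g depending only on box d K:
   the walk jumps by u with prob P0(u) + eps c(u) eta(0); then
   eta_1(x) = xi_1(u + x), where xi_1(y) ~ Q_{[y = X_0]}(xi_0(y), .). *)
Definition Top (d : nat) (U : list Site) (P0 c : Site -> R) (eps : R)
    (Q0 Q1 : bool -> bool -> R) (K : nat) (g : Config -> R) (eta : Config) : R :=
  lsum (fun u =>
    (P0 u + eps * c u * sg (eta (origin d))) *
    lsum (fun s => g s *
       lprod (fun x =>
         (if site_eq_dec (vadd u x) (origin d) then Q1 else Q0)
           (eta (vadd u x)) (s x)) (box d K))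
      (configs (box d K))) U.

(* integral w.r.t. Pi of g depending only on window L; Pi is given by its
   finite-dimensional marginals piw L s = Pi(eta = s on L) *)
Definition integ (piw : list Site -> Config -> R) (L : list Site) (g : Config -> R) : R :=
  lsum (fun s => g s * piw L s) (configs L).

Definition standing_hyp (d : nat) (U : list Site) (Rr : nat) (P0 c : Site -> R)
    (eps : R) (Q0 Q1 : bool -> bool -> R) (M mubar : R)
    (piw : list Site -> Config -> R) : Prop :=
  1 < M /\ 0 < mubar < 1 /\
  (* piw is a consistent family of marginals of a probability measure Pi on Omega *)
  (forall s, piw [] s = 1) /\
  (forall L s s', (forall x, In x L -> s x = s' x) -> piw L s = piw L s') /\
  (forall L L' s, Permutation L L' -> piw L s = piw L' s) /\
  (forall L y s, NoDup (y :: L) -> Forall (valid_site d) (y :: L) ->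
     piw L s = piw (y :: L) (upd s y true) + piw (y :: L) (upd s y false)) /\
  (* Pi << Pi_0 with bounded density *)
  (exists Kd, forall L s, NoDup L -> Forall (valid_site d) L ->
     0 <= piw L s <= Kd * (/ 2) ^ length L) /\
  (forall K g, depends_on (box d K) g ->
     integ piw (box d (K + Rr)) (Top d U P0 c eps Q0 Q1 K g) = integ piw (box d K) g) /\
  (forall L s, piw L (fun x => negb (s x)) = piw L s) /\
  (forall K g, depends_on (box d K) g -> integ piw (box d K) g = 0 ->
     normM M (box d (K + Rr)) (Top d U P0 c eps Q0 Q1 K g)
       <= mubar * normM M (box d K) g).

Definition updn (h : nat -> bool) (t : nat) (b : bool) : nat -> bool :=
  fun n => if Nat.eqb n t then b else h n.

Definition Psi (gam : list nat) (z : nat -> bool) : R := lprod (fun t => sg (z t)) gam.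

Definition depends_first (m : nat) (f : (nat -> bool) -> R) : Prop :=
  forall z z', (forall t, (t < m)%nat -> z t = z' t) -> f z = f z'.

(* all zeta in {+-1}^{0..m-1} (false beyond) *)
Fixpoint bseqs (m : nat) : list (nat -> bool) :=
  match m with
  | O => [fun _ => false]
  | S m' => flat_map (fun z => [updn z m' true; updn z m' false]) (bseqs m')
  end.

Definition wcoef (m : nat) (f : (nat -> bool) -> R) (gam : list nat) : R :=
  (/ 2) ^ m * lsum (fun z => f z * Psi gam z) (bseqs m).

Definition maxcoef (m : nat) (f : (nat -> bool) -> R) : R :=
  fold_right Rmax 0 (map (fun gam => Rabs (wcoef m f gam)) (subsets (seq 0 m))).

(* Ev k t hist x xi : expectation of f(zeta) given X_t = x, xi_t = xi, with
   zeta_0..zeta_{t-1} recorded in hist, when k further transitions of the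
   chain (X_t, xi_t) remain; only xi on the window B is tracked. *)
Fixpoint Ev (d : nat) (U : list Site) (P0 c : Site -> R) (eps : R)
    (Q0 Q1 : bool -> bool -> R) (B : list Site) (f : (nat -> bool) -> R)
    (k t : nat) (hist : nat -> bool) (x : Site) (xi : Config) : R :=
  let hist' := updn hist t (xi x) in
  match k with
  | O => f hist'
  | S k' =>
      lsum (fun u =>
        (P0 u + eps * c u * sg (xi x)) *
        lsum (fun xi' =>
          lprod (fun y => (if site_eq_dec y x then Q1 else Q0) (xi y) (xi' y)) B *
          Ev d U P0 c eps Q0 Q1 B f k' (S t) hist' (vadd x u) xi')
          (configs B)) U
  end.

(* G^(f)(eta) = E[f(zeta_0,...,zeta_{m-1}) | eta_0 = eta]; the walk stays in
   box d (Rr*m) up to time m-1, so this window suffices. *)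
Definition Gf (d : nat) (U : list Site) (Rr : nat) (P0 c : Site -> R) (eps : R)
    (Q0 Q1 : bool -> bool -> R) (m : nat) (f : (nat -> bool) -> R) (eta : Config) : R :=
  Ev d U P0 c eps Q0 Q1 (box d (Rr * m)) f (m - 1) 0 (fun _ => false) (origin d) eta.

Definition mustar (M mubar : R) : R := M * sqrt (mubar * (1 + 2 * mubar)).

(* Main.v *)
Require Import Defs.
From Stdlib Require Import Reals List ZArith.
From Stdlib Require Import Lra Lia Permutation FunctionalExtensionality Setoid Morphisms Classical.
Import ListNotations.
Open Scope R_scope.

Lemma lsum_nil {A} (f : A -> R) : lsum f [] = 0. Proof. reflexivity. Qed.
Lemma lsum_cons {A} (f : A -> R) a l : lsum f (a :: l) = f a + lsum f l. Proof. reflexivity. Qed.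
Lemma lsum_app {A} (f : A -> R) l1 l2 : lsum f (l1 ++ l2) = lsum f l1 + lsum f l2.
Proof. induction l1; simpl; [lra|]. unfold lsum in *; simpl. rewrite IHl1. lra. Qed.
Lemma lsum_map {A B} (f : B -> R) (g : A -> B) l : lsum f (map g l) = lsum (fun a => f (g a)) l.
Proof. induction l; simpl; auto. unfold lsum in *; simpl; rewrite IHl; auto. Qed.
Lemma lsum_flat_map {A B} (f : B -> R) (g : A -> list B) l :
  lsum f (flat_map g l) = lsum (fun a => lsum f (g a)) l.
Proof. induction l; simpl; auto. rewrite lsum_app, IHl. reflexivity. Qed.
Lemma lsum_ext {A} (f g : A -> R) l : (forall x, In x l -> f x = g x) -> lsum f l = lsum g l.
Proof. induction l; intros H; simpl; auto. unfold lsum in *; simpl.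
  rewrite H by (left; auto). rewrite IHl; auto. intros; apply H; right; auto. Qed.
Lemma lsum_plus {A} (f g : A -> R) l : lsum (fun x => f x + g x) l = lsum f l + lsum g l.
Proof. induction l; simpl; [unfold lsum; simpl; lra|]. unfold lsum in *; simpl; rewrite IHl; lra. Qed.
Lemma lsum_scal {A} (c : R) (f : A -> R) l : lsum (fun x => c * f x) l = c * lsum f l.
Proof. induction l; simpl; [unfold lsum; simpl; lra|]. unfold lsum in *; simpl; rewrite IHl; lra. Qed.
Lemma lsum_opp {A} (f : A -> R) l : lsum (fun x => - f x) l = - lsum f l.
Proof. induction l; simpl; [unfold lsum; simpl; lra|]. unfold lsum in *; simpl; rewrite IHl; lra. Qed.
Lemma lsum_zero {A} (l : list A) : lsum (fun _ => 0) l = 0.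
Proof. induction l; simpl; auto. unfold lsum in *; simpl; rewrite IHl; lra. Qed.
Lemma lsum_const {A} (c : R) (l : list A) : lsum (fun _ => c) l = c * INR (length l).
Proof. induction l; simpl; [unfold lsum; simpl; lra|]. unfold lsum in *; simpl; rewrite IHl.
  destruct (length l); simpl; lra. Qed.
Lemma lsum_le {A} (f g : A -> R) l : (forall x, In x l -> f x <= g x) -> lsum f l <= lsum g l.
Proof. induction l; intros H; simpl; [unfold lsum; simpl; lra|]. unfold lsum in *; simpl.
  assert (f a <= g a) by (apply H; left; auto).
  assert (fold_right (fun a r => f a + r) 0 l <= fold_right (fun a r => g a + r) 0 l)
    by (apply IHl; intros; apply H; right; auto). lra. Qed.
Lemma lsum_nonneg {A} (f : A -> R) l : (forall x, In x l -> 0 <= f x) -> 0 <= lsum f l.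
Proof. intros H. rewrite <- (lsum_zero l). apply lsum_le; auto. Qed.
Lemma lsum_abs {A} (f : A -> R) l : Rabs (lsum f l) <= lsum (fun x => Rabs (f x)) l.
Proof. induction l; simpl; unfold lsum in *; simpl. rewrite Rabs_R0; lra.
  eapply Rle_trans; [apply Rabs_triang|]. lra. Qed.
Lemma lsum_perm {A} (f : A -> R) l l' : Permutation l l' -> lsum f l = lsum f l'.
Proof. induction 1; simpl; unfold lsum in *; simpl; try lra. Qed.
Lemma lsum_swap {A B} (F : A -> B -> R) l1 l2 :
  lsum (fun a => lsum (fun b => F a b) l2) l1 = lsum (fun b => lsum (fun a => F a b) l1) l2.
Proof. induction l1. rewrite lsum_nil. symmetry. apply lsum_zero.
  rewrite lsum_cons, IHl1.
  transitivity (lsum (fun b => F a b + lsum (fun a0 => F a0 b) l1) l2).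
  - rewrite lsum_plus; reflexivity.
  - apply lsum_ext; intros; rewrite lsum_cons; reflexivity. Qed.
Lemma lsum_in_le {A} (f : A -> R) l x : (forall y, In y l -> 0 <= f y) -> In x l -> f x <= lsum f l.
Proof. induction l; intros H Hx; simpl in *; [contradiction|]. unfold lsum in *; simpl.
  destruct Hx as [<-|Hx].
  - assert (0 <= fold_right (fun a r => f a + r) 0 l). { apply (lsum_nonneg f l). intros; apply H; auto. } lra.
  - assert (0 <= f a) by (apply H; auto). specialize (IHl (fun y Hy => H y (or_intror Hy)) Hx). lra. Qed.

Lemma lprod_cons {A} (f : A -> R) a l : lprod f (a :: l) = f a * lprod f l. Proof. reflexivity. Qed.
Lemma lprod_app {A} (f : A -> R) l1 l2 : lprod f (l1 ++ l2) = lprod f l1 * lprod f l2.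
Proof. induction l1; simpl; unfold lprod in *; simpl; [lra|]. rewrite IHl1. lra. Qed.
Lemma lprod_map {A B} (f : B -> R) (g : A -> B) l : lprod f (map g l) = lprod (fun a => f (g a)) l.
Proof. induction l; simpl; auto. unfold lprod in *; simpl; rewrite IHl; auto. Qed.
Lemma lprod_ext {A} (f g : A -> R) l : (forall x, In x l -> f x = g x) -> lprod f l = lprod g l.
Proof. induction l; intros H; simpl; auto. unfold lprod in *; simpl.
  rewrite H by (left; auto). rewrite IHl; auto. intros; apply H; right; auto. Qed.
Lemma lprod_mult {A} (f g : A -> R) l : lprod (fun x => f x * g x) l = lprod f l * lprod g l.
Proof. induction l; simpl; unfold lprod in *; simpl; [lra|]. rewrite IHl. lra. Qed.
Lemma lprod_perm {A} (f : A -> R) l l' : Permutation l l' -> lprod f l = lprod f l'.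
Proof. induction 1; simpl; unfold lprod in *; simpl; try lra. rewrite IHPermutation; auto. Qed.
Lemma lprod_one {A} (l : list A) : lprod (fun _ => 1) l = 1.
Proof. induction l; simpl; auto. unfold lprod in *; simpl; rewrite IHl; lra. Qed.

Lemma sg_sq b : sg b * sg b = 1. Proof. destruct b; simpl; lra. Qed.
Lemma sg_neg b : sg (negb b) = - sg b. Proof. destruct b; simpl; lra. Qed.
Lemma Rabs_sg b : Rabs (sg b) = 1. Proof. destruct b; simpl; [apply Rabs_R1|]. rewrite Rabs_left; lra. Qed.
Lemma lprod_sg_abs {A} (s : A -> bool) G : Rabs (lprod (fun x => sg (s x)) G) = 1.
Proof. induction G; simpl; unfold lprod in *; simpl. apply Rabs_R1.
  rewrite Rabs_mult, Rabs_sg, IHG. lra. Qed.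
Lemma lprod_nil {A} (f : A -> R) : lprod f [] = 1. Proof. reflexivity. Qed.

Section Gen.
Context {A : Type} (dec : forall x y : A, {x = y} + {x <> y}).

Definition gupd (s : A -> bool) (y : A) (b : bool) : A -> bool :=
  fun x => if dec x y then b else s x.
Fixpoint cfgs (l : list A) : list (A -> bool) :=
  match l with
  | [] => [fun _ => false]
  | y :: l' => flat_map (fun s => [gupd s y true; gupd s y false]) (cfgs l')
  end.
Definition gdep (l : list A) (g : (A -> bool) -> R) : Prop :=
  forall s s', (forall x, In x l -> s x = s' x) -> g s = g s'.
Definition gPhi (G : list A) (s : A -> bool) : R := lprod (fun x => sg (s x)) G.
Definition gcoef (l : list A) (g : (A -> bool) -> R) (G : list A) : R :=
  (/ 2) ^ length l * lsum (fun s => g s * gPhi G s) (cfgs l).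
Definition gnorm (M : R) (l : list A) (g : (A -> bool) -> R) : R :=
  lsum (fun G => Rabs (gcoef l g G) * M ^ length G) (subsets l).

Lemma cfgs_cons F y l :
  lsum F (cfgs (y :: l)) = lsum (fun s => F (gupd s y true) + F (gupd s y false)) (cfgs l).
Proof. cbn [cfgs]. rewrite lsum_flat_map. apply lsum_ext; intros.
  unfold lsum; simpl. lra. Qed.

Lemma cfgs_nil F : lsum F (cfgs []) = F (fun _ => false).
Proof. unfold lsum; simpl. lra. Qed.

Lemma gupd_same s y b : gupd s y b y = b.
Proof. unfold gupd; destruct (dec y y); congruence. Qed.
Lemma gupd_other s y b x : x <> y -> gupd s y b x = s x.
Proof. unfold gupd; destruct (dec x y); congruence. Qed.

Lemma gupd_comm s x y a b : x <> y -> gupd (gupd s y a) x b = gupd (gupd s x b) y a.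
Proof. intros H. apply functional_extensionality; intro z. unfold gupd.
  destruct (dec z x), (dec z y); subst; congruence. Qed.
Lemma gupd_gupd s x a b : gupd (gupd s x a) x b = gupd s x b.
Proof. apply functional_extensionality; intro z. unfold gupd. destruct (dec z x); auto. Qed.

Lemma cfgs_perm F l l' : Permutation l l' -> lsum F (cfgs l) = lsum F (cfgs l').
Proof.
  intros H. revert F. induction H; intros F.
  - reflexivity.
  - rewrite !cfgs_cons. apply IHPermutation.
  - rewrite !cfgs_cons. rewrite !lsum_plus.
    destruct (dec x y) as [->|Hxy].
    + lra.
    + assert (E : forall a b s, gupd (gupd s y a) x b = gupd (gupd s x b) y a)
        by (intros; apply gupd_comm; auto).
      assert (E2 : forall a b, lsum (fun s => F (gupd (gupd s y a) x b)) (cfgs l) =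
                              lsum (fun s => F (gupd (gupd s x b) y a)) (cfgs l))
        by (intros; apply lsum_ext; intros; rewrite E; auto).
      rewrite !E2. lra.
  - rewrite IHPermutation1. apply IHPermutation2.
Qed.

Lemma lprod_gupd (h : A -> bool -> R) s y b l :
  ~ In y l -> lprod (fun x => h x (gupd s y b x)) l = lprod (fun x => h x (s x)) l.
Proof. intros H. apply lprod_ext. intros x Hx. rewrite gupd_other; auto. intro; subst; auto. Qed.

Lemma sum_weights (q : A -> bool -> R) l :
  NoDup l -> (forall y, q y true + q y false = 1) ->
  lsum (fun s => lprod (fun y => q y (s y)) l) (cfgs l) = 1.
Proof.
  intros Hl Hq. induction l.
  - rewrite cfgs_nil. reflexivity.
  - inversion Hl; subst. rewrite cfgs_cons.
    transitivity (lsum (fun s => (q a true + q a false) * lprod (fun y => q y (s y)) l) (cfgs l)).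
    + apply lsum_ext; intros s _. rewrite !lprod_cons, !gupd_same, !lprod_gupd by auto. lra.
    + rewrite lsum_scal, IHl by auto. rewrite Hq. lra.
Qed.

Lemma gdep_upd l y F : gdep (y :: l) F -> forall b, gdep l (fun s => F (gupd s y b)).
Proof. intros H b s s' Hs. apply H. intros x [<-|Hx].
  - rewrite !gupd_same; auto.
  - unfold gupd. destruct (dec x y); auto. Qed.

Lemma gdep_nil F s s' : gdep [] F -> F s = F s'.
Proof. intros H; apply H; intros x []. Qed.

Lemma marginal (q : A -> bool -> R) l r F :
  NoDup (l ++ r) -> (forall y, q y true + q y false = 1) -> gdep l F ->
  lsum (fun s => lprod (fun y => q y (s y)) (l ++ r) * F s) (cfgs (l ++ r)) =
  lsum (fun s => lprod (fun y => q y (s y)) l * F s) (cfgs l).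
Proof.
  intros Hn Hq. revert F. induction l; intros F HF; simpl app in *.
  - rewrite cfgs_nil. rewrite lprod_nil, Rmult_1_l.
    transitivity (lsum (fun s => F (fun _ => false) * lprod (fun y => q y (s y)) r) (cfgs r)).
    + apply lsum_ext; intros. rewrite (gdep_nil F x (fun _ => false)); auto. lra.
    + rewrite lsum_scal, sum_weights; auto. lra.
  - inversion Hn; subst. rewrite !cfgs_cons.
    set (F' := fun s => q a true * F (gupd s a true) + q a false * F (gupd s a false)).
    transitivity (lsum (fun s => lprod (fun y => q y (s y)) (l ++ r) * F' s) (cfgs (l ++ r))).
    + apply lsum_ext; intros s _. unfold F'. rewrite !lprod_cons, !gupd_same, !lprod_gupd by auto. lra.
    + rewrite IHl; auto.
      * apply lsum_ext; intros s _. unfold F'. rewrite !lprod_cons, !gupd_same, !lprod_gupd; auto.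
        lra. intro; apply H1; apply in_or_app; auto. intro; apply H1; apply in_or_app; auto.
      * intros s s' Hs. unfold F'. rewrite (gdep_upd l a F HF true s s'), (gdep_upd l a F HF false s s'); auto.
Qed.

Lemma reindex (psi : A -> A) (q : A -> bool -> R) L F :
  NoDup L -> (forall x y, In x L -> In y L -> psi x = psi y -> x = y) -> gdep L F ->
  lsum (fun xi => lprod (fun z => q (psi z) (xi (psi z))) L * F (fun z => xi (psi z))) (cfgs (map psi L)) =
  lsum (fun s => lprod (fun z => q (psi z) (s z)) L * F s) (cfgs L).
Proof.
  intros Hn Hi. revert F. induction L; intros F HF.
  - simpl map. rewrite !cfgs_nil, !lprod_nil. reflexivity.
  - inversion Hn; subst. simpl map. rewrite !cfgs_cons.
    set (F' := fun s => q (psi a) true * F (gupd s a true) + q (psi a) false * F (gupd s a false)).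
    assert (Hne : forall z, In z L -> psi z <> psi a).
    { intros z Hz E. apply Hi in E; [subst; contradiction| right; auto | left; auto]. }
    transitivity (lsum (fun xi => lprod (fun z => q (psi z) (xi (psi z))) L * F' (fun z => xi (psi z))) (cfgs (map psi L))).
    + apply lsum_ext; intros xi _. unfold F'. rewrite !lprod_cons, !gupd_same.
      assert (E : forall b, lprod (fun z => q (psi z) (gupd xi (psi a) b (psi z))) L =
                            lprod (fun z => q (psi z) (xi (psi z))) L).
      { intros b. apply lprod_ext. intros z Hz. rewrite gupd_other; auto. }
      rewrite !E.
      assert (E2 : forall b, F (fun z => gupd xi (psi a) b (psi z)) = F (gupd (fun z => xi (psi z)) a b)).
      { intros b. apply HF. intros z [<-|Hz]. rewrite gupd_same, gupd_same. auto.
        rewrite gupd_other by auto. rewrite gupd_other; auto. intro; subst; contradiction. }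
      rewrite !E2. lra.
    + rewrite IHL; auto.
      * apply lsum_ext; intros s _. unfold F'. rewrite !lprod_cons, !gupd_same, !(lprod_gupd (fun z b => q (psi z) b)) by auto. lra.
      * intros x y Hx Hy; apply Hi; right; auto.
      * intros s s' Hs. unfold F'. rewrite (gdep_upd L a F HF true s s'), (gdep_upd L a F HF false s s'); auto.
Qed.

Lemma flip_sum l F : gdep l F -> lsum F (cfgs l) = lsum (fun s => F (fun x => negb (s x))) (cfgs l).
Proof.
  revert F. induction l; intros F HF.
  - rewrite !cfgs_nil. apply HF. intros x [].
  - rewrite !cfgs_cons.
    set (H := fun s => F (gupd s a true) + F (gupd s a false)).
    assert (HH : gdep l H).
    { intros s s' Hs. unfold H. rewrite (gdep_upd l a F HF true s s'), (gdep_upd l a F HF false s s'); auto. }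
    transitivity (lsum H (cfgs l)); [reflexivity|]. rewrite (IHl H HH).
    apply lsum_ext; intros s _. unfold H.
    assert (E : forall b, (fun x => negb (gupd s a b x)) = gupd (fun x => negb (s x)) a (negb b)).
    { intros b; apply functional_extensionality; intro x. unfold gupd; destruct (dec x a); auto. }
    rewrite !E. simpl. lra.
Qed.



Lemma subsets_incl (l G : list A) : In G (subsets l) -> incl G l.
Proof.
  revert G. induction l; intros G HG; simpl in HG.
  - destruct HG as [<-|[]]. intros x [].
  - apply in_app_or in HG. destruct HG as [HG|HG].
    + intros x Hx. right. apply (IHl G HG); auto.
    + apply in_map_iff in HG. destruct HG as [G' [<- HG']]. intros x [<-|Hx]; [left; auto|right; apply (IHl G' HG'); auto].
Qed.

Lemma subsets_nodup (l G : list A) : NoDup l -> In G (subsets l) -> NoDup G.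
Proof.
  revert G. induction l; intros G Hn HG; simpl in HG.
  - destruct HG as [<-|[]]. constructor.
  - inversion Hn; subst. apply in_app_or in HG. destruct HG as [HG|HG]; auto.
    apply in_map_iff in HG. destruct HG as [G' [<- HG']]. constructor; auto.
    intro Ha. apply H1. apply (subsets_incl l G' HG'); auto.
Qed.

Lemma char_sum (l G : list A) : NoDup l -> In G (subsets l) ->
  lsum (gPhi G) (cfgs l) = match G with [] => 2 ^ length l | _ => 0 end.
Proof.
  revert G. induction l; intros G Hn HG.
  - simpl in HG. destruct HG as [<-|[]]. rewrite cfgs_nil. reflexivity.
  - inversion Hn; subst. rewrite cfgs_cons. simpl in HG. apply in_app_or in HG. destruct HG as [HG|HG].
    + assert (Hna : ~ In a G) by (intro; apply H1; apply (subsets_incl l G HG); auto).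
      transitivity (lsum (fun s => 2 * gPhi G s) (cfgs l)).
      * apply lsum_ext; intros s _. unfold gPhi. rewrite !(lprod_gupd (fun _ b => sg b)) by auto. lra.
      * rewrite lsum_scal, IHl; auto. destruct G; simpl; lra.
    + apply in_map_iff in HG. destruct HG as [G' [<- HG']].
      assert (Hna : ~ In a G') by (intro; apply H1; apply (subsets_incl l G' HG'); auto).
      transitivity (lsum (fun s => 0) (cfgs l)).
      * apply lsum_ext; intros s _. unfold gPhi. rewrite !lprod_cons, !gupd_same.
        rewrite !(lprod_gupd (fun _ b => sg b)) by auto. simpl. lra.
      * apply lsum_zero.
Qed.

Lemma subsets_prod l s s0 :
  lsum (fun G => gPhi G s * gPhi G s0) (subsets l) = lprod (fun x => 1 + sg (s x) * sg (s0 x)) l.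
Proof.
  induction l; cbn [subsets].
  - rewrite lsum_cons, lsum_nil. unfold gPhi; rewrite !lprod_nil. lra.
  - rewrite lsum_app, lsum_map, IHl. rewrite lprod_cons.
    transitivity (lprod (fun x => 1 + sg (s x) * sg (s0 x)) l +
      sg (s a) * sg (s0 a) * lsum (fun G => gPhi G s * gPhi G s0) (subsets l)).
    + f_equal. rewrite <- lsum_scal. apply lsum_ext; intros. unfold gPhi; rewrite !lprod_cons. lra.
    + rewrite IHl. lra.
Qed.

Lemma delta_sum l g s0 : NoDup l -> gdep l g ->
  lsum (fun s => g s * lprod (fun x => 1 + sg (s x) * sg (s0 x)) l) (cfgs l) = 2 ^ length l * g s0.
Proof.
  revert g. induction l; intros g Hn Hg.
  - rewrite cfgs_nil. unfold lprod; simpl. rewrite (gdep_nil g (fun _ => false) s0 Hg). lra.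
  - inversion Hn; subst. rewrite cfgs_cons.
    set (g' := fun s => 2 * g (gupd s a (s0 a))).
    transitivity (lsum (fun s => g' s * lprod (fun x => 1 + sg (s x) * sg (s0 x)) l) (cfgs l)).
    + apply lsum_ext; intros s _. unfold g'. rewrite !lprod_cons, !gupd_same.
      rewrite !(lprod_gupd (fun x b => 1 + sg b * sg (s0 x))) by auto.
      destruct (s0 a); simpl; lra.
    + rewrite IHl; auto.
      * unfold g'. replace (gupd s0 a (s0 a)) with s0.
        cbn [length pow]. lra.
        apply functional_extensionality; intro x; unfold gupd; destruct (dec x a); subst; auto.
      * intros s s' Hs. unfold g'. f_equal. apply Hg. intros x [<-|Hx].
        rewrite !gupd_same; auto. unfold gupd; destruct (dec x a); auto.
Qed.

Lemma inversion l g s0 : NoDup l -> gdep l g ->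
  g s0 = lsum (fun G => gcoef l g G * gPhi G s0) (subsets l).
Proof.
  intros Hn Hg. unfold gcoef.
  transitivity (lsum (fun G => (/2) ^ length l * lsum (fun s => g s * (gPhi G s * gPhi G s0)) (cfgs l)) (subsets l)).
  2: { apply lsum_ext; intros. rewrite Rmult_assoc. f_equal. rewrite Rmult_comm, <- lsum_scal.
       apply lsum_ext; intros. lra. }
  rewrite lsum_scal.
  transitivity ((/2) ^ length l * lsum (fun s => g s * lprod (fun x => 1 + sg (s x) * sg (s0 x)) l) (cfgs l)).
  - rewrite delta_sum; auto. rewrite <- Rmult_assoc, <- Rpow_mult_distr.
    replace (/2 * 2) with 1 by lra. rewrite pow1. lra.
  - f_equal. rewrite lsum_swap. apply lsum_ext; intros s _.
    rewrite <- subsets_prod, <- lsum_scal. reflexivity.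
Qed.

End Gen.

Section Gen2.
Context {A : Type} (dec : forall x y : A, {x = y} + {x <> y}).

Lemma gcoef_lin l g1 g2 a b G :
  gcoef dec l (fun s => a * g1 s + b * g2 s) G = a * gcoef dec l g1 G + b * gcoef dec l g2 G.
Proof. unfold gcoef.
  transitivity ((/2) ^ length l * (a * lsum (fun s => g1 s * gPhi G s) (cfgs dec l) +
                                   b * lsum (fun s => g2 s * gPhi G s) (cfgs dec l))); [|lra].
  f_equal. rewrite <- !lsum_scal, <- lsum_plus. apply lsum_ext; intros; lra. Qed.

Lemma gcoef_sumI {I} l (F : I -> (A -> bool) -> R) (Is : list I) G :
  gcoef dec l (fun s => lsum (fun i => F i s) Is) G = lsum (fun i => gcoef dec l (F i) G) Is.
Proof. unfold gcoef. rewrite lsum_scal. f_equal. rewrite (lsum_swap (fun i s => F i s * gPhi G s)).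
  apply lsum_ext; intros s _.
  rewrite Rmult_comm, <- lsum_scal. apply lsum_ext; intros; lra. Qed.

Lemma gnorm_nonneg M l g : 0 <= M -> 0 <= gnorm dec M l g.
Proof. intros HM. unfold gnorm. apply lsum_nonneg. intros.
  apply Rmult_le_pos; [apply Rabs_pos| apply pow_le; auto]. Qed.

Lemma gnorm_sumI {I} M l (F : I -> (A -> bool) -> R) (Is : list I) : 0 <= M ->
  gnorm dec M l (fun s => lsum (fun i => F i s) Is) <= lsum (fun i => gnorm dec M l (F i)) Is.
Proof. intros HM. unfold gnorm. rewrite lsum_swap. apply lsum_le; intros G _.
  rewrite gcoef_sumI.
  rewrite (lsum_ext (fun i => Rabs (gcoef dec l (F i) G) * M ^ length G) (fun i => M ^ length G * Rabs (gcoef dec l (F i) G))) by (intros; lra).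
  rewrite lsum_scal, Rmult_comm. apply Rmult_le_compat_l; [apply pow_le; auto|].
  eapply Rle_trans; [apply lsum_abs|]. apply lsum_le; intros; apply Rle_refl. Qed.

Lemma gnorm_lin M l g1 g2 a b : 0 <= M ->
  gnorm dec M l (fun s => a * g1 s + b * g2 s) <= Rabs a * gnorm dec M l g1 + Rabs b * gnorm dec M l g2.
Proof. intros HM. unfold gnorm. rewrite <- !lsum_scal, <- lsum_plus. apply lsum_le; intros G _.
  rewrite gcoef_lin. assert (0 <= M ^ length G) by (apply pow_le; auto).
  eapply Rle_trans. apply Rmult_le_compat_r; auto. apply Rabs_triang.
  rewrite !Rabs_mult. lra. Qed.

Lemma gnorm_scal M l g a : gnorm dec M l (fun s => a * g s) = Rabs a * gnorm dec M l g.
Proof. unfold gnorm. rewrite <- lsum_scal. apply lsum_ext; intros G _.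
  replace (gcoef dec l (fun s => a * g s) G) with (a * gcoef dec l g G).
  rewrite Rabs_mult. lra.
  unfold gcoef. rewrite (lsum_ext (fun s => a * g s * gPhi G s) (fun s => a * (g s * gPhi G s))) by (intros; lra).
  rewrite lsum_scal. lra. Qed.

Lemma gnorm_ext M l g1 g2 : (forall s, g1 s = g2 s) -> gnorm dec M l g1 = gnorm dec M l g2.
Proof. intros H. replace g2 with g1; auto. apply functional_extensionality; auto. Qed.

Lemma gcoef_const l a G : NoDup l -> In G (subsets l) ->
  gcoef dec l (fun _ => a) G = match G with [] => a | _ => 0 end.
Proof. intros Hn HG. unfold gcoef. rewrite lsum_scal. rewrite (char_sum dec l G Hn HG).
  destruct G; [|lra]. rewrite <- Rmult_assoc, (Rmult_comm _ a), Rmult_assoc, <- Rpow_mult_distr.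
  replace (/2 * 2) with 1 by lra. rewrite pow1. lra. Qed.

Lemma subsets_nil_sum (l : list A) (c : R) (F : list A -> R) :
  (forall G, G <> [] -> F G = 0) -> F [] = c -> lsum F (subsets l) = c.
Proof. intros H0 H1. induction l; cbn [subsets].
  - rewrite lsum_cons, lsum_nil, H1. lra.
  - rewrite lsum_app, IHl, lsum_map. rewrite (lsum_ext _ (fun _ => 0)). rewrite lsum_zero. lra.
    intros; apply H0; discriminate. Qed.

Lemma gnorm_const M l a : NoDup l -> gnorm dec M l (fun _ => a) = Rabs a.
Proof. intros Hn. unfold gnorm.
  rewrite (lsum_ext _ (fun G => match G with [] => Rabs a | _ => 0 end)).
  - apply subsets_nil_sum; auto. intros [|x G] H; [congruence|auto].
  - intros G HG. rewrite gcoef_const; auto. destruct G; simpl. lra. rewrite Rabs_R0; lra. Qed.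

Lemma sup_bound M l g s : NoDup l -> gdep l g -> 1 <= M -> Rabs (g s) <= gnorm dec M l g.
Proof. intros Hn Hg HM. rewrite (inversion dec l g s Hn Hg). unfold gnorm.
  eapply Rle_trans; [apply lsum_abs|]. apply lsum_le; intros G _.
  rewrite Rabs_mult. unfold gPhi. rewrite lprod_sg_abs, Rmult_1_r.
  assert (1 <= M ^ length G) by (apply pow_R1_Rle; auto).
  assert (0 <= Rabs (gcoef dec l g G)) by apply Rabs_pos. nra. Qed.

Lemma subsets_perm (F : list A -> R) l l' :
  (forall G G', Permutation G G' -> F G = F G') -> Permutation l l' ->
  lsum F (subsets l) = lsum F (subsets l').
Proof.
  intros HF H. revert F HF. induction H; intros F HF; cbn [subsets].
  - reflexivity.
  - rewrite !lsum_app, !lsum_map. rewrite (IHPermutation F HF), (IHPermutation (fun a => F (x :: a))); auto.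
  - rewrite !lsum_app, !lsum_map, !lsum_app, !lsum_map.
    rewrite (lsum_ext (fun a => F (x :: y :: a)) (fun a => F (y :: x :: a))). lra.
    intros; apply HF; constructor.
  - rewrite (IHPermutation1 F HF). apply IHPermutation2; auto.
Qed.

Lemma gnorm_perm M l l' g : Permutation l l' -> gnorm dec M l g = gnorm dec M l' g.
Proof. intros H. unfold gnorm.
  assert (E : forall G, gcoef dec l g G = gcoef dec l' g G).
  { intros G. unfold gcoef. rewrite (Permutation_length H). f_equal. apply cfgs_perm; auto. }
  rewrite (lsum_ext _ (fun G => Rabs (gcoef dec l' g G) * M ^ length G)) by (intros; rewrite E; auto).
  apply subsets_perm; auto. intros G G' HG. rewrite (Permutation_length HG). f_equal. f_equal.
  unfold gcoef. f_equal. apply lsum_ext; intros. unfold gPhi. rewrite (lprod_perm _ _ _ HG). auto.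
Qed.

Lemma gnorm_S M l g o : NoDup l -> In o l -> 1 <= M ->
  gnorm dec M l (fun s => sg (s o) * g s) <= M * gnorm dec M l g.
Proof.
  intros Hn Ho HM. destruct (in_split _ _ Ho) as [l1 [l2 ->]].
  assert (Hp : Permutation (l1 ++ o :: l2) (o :: l1 ++ l2)) by (symmetry; apply Permutation_middle).
  rewrite !(gnorm_perm M _ _ _ Hp). set (l' := l1 ++ l2).
  assert (Hn' : NoDup (o :: l')) by (apply (Permutation_NoDup Hp); auto).
  unfold gnorm. cbn [subsets]. rewrite !lsum_app, !lsum_map.
  assert (E1 : forall G, gcoef dec (o :: l') (fun s => sg (s o) * g s) G = gcoef dec (o :: l') g (o :: G)).
  { intros G; unfold gcoef. f_equal. apply lsum_ext; intros. unfold gPhi; rewrite lprod_cons. lra. }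
  assert (E2 : forall G, gcoef dec (o :: l') g (o :: o :: G) = gcoef dec (o :: l') g G).
  { intros G; unfold gcoef. f_equal. apply lsum_ext; intros. unfold gPhi; rewrite !lprod_cons.
    rewrite <- (Rmult_assoc (sg (x o)) (sg (x o))), sg_sq, Rmult_1_l. reflexivity. }
  rewrite (lsum_ext (fun G => Rabs (gcoef dec (o :: l') (fun s => sg (s o) * g s) G) * M ^ length G)
                    (fun G => Rabs (gcoef dec (o :: l') g (o :: G)) * M ^ length G)) by (intros; rewrite E1; auto).
  rewrite (lsum_ext (fun G => Rabs (gcoef dec (o :: l') (fun s => sg (s o) * g s) (o :: G)) * M ^ length (o :: G))
                    (fun G => M * (Rabs (gcoef dec (o :: l') g G) * M ^ length G)))
    by (intros; rewrite E1, E2; simpl; lra).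
  rewrite lsum_scal.
  match goal with |- ?X + _ <= M * (_ + ?B) => assert (X <= M * B); [|lra] end.
  rewrite <- lsum_scal. apply lsum_le; intros G _. simpl length. simpl pow.
  assert (0 <= Rabs (gcoef dec (o :: l') g (o :: G))) by apply Rabs_pos.
  assert (1 <= M ^ length G) by (apply pow_R1_Rle; lra).
  assert (0 <= M ^ length G) by lra.
  assert (Rabs (gcoef dec (o :: l') g (o :: G)) * M ^ length G <= Rabs (gcoef dec (o :: l') g (o :: G)) * M ^ length G * (M * M)).
  { rewrite <- (Rmult_1_r (Rabs _ * _)) at 1. apply Rmult_le_compat_l. nra. nra. }
  nra.
Qed.

End Gen2.

Lemma nodup_map_inj {A B} (f : A -> B) l :
  (forall x y, In x l -> In y l -> f x = f y -> x = y) -> NoDup l -> NoDup (map f l).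
Proof. induction l; intros Hi Hn; simpl; constructor.
  - inversion Hn; subst. intro H. apply in_map_iff in H. destruct H as [y [E Hy]].
    apply Hi in E; [subst; contradiction|right|left]; auto.
  - inversion Hn; subst. apply IHl; auto. intros; apply Hi; auto; right; auto. Qed.

Lemma nodup_flat_map {A B} (f : A -> list B) l :
  NoDup l -> (forall a, In a l -> NoDup (f a)) ->
  (forall a b x, In a l -> In b l -> In x (f a) -> In x (f b) -> a = b) -> NoDup (flat_map f l).
Proof. induction l; intros Hn Hf Hd; simpl; [constructor|]. inversion Hn; subst.
  apply NoDup_app; auto. apply Hf; left; auto. apply IHl; auto.
  intros; apply Hf; right; auto. intros; apply (Hd a0 b x); auto; right; auto.
  intros x Hx Hx'. apply in_flat_map in Hx'. destruct Hx' as [b [Hb Hxb]].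
  assert (a = b) by (apply (Hd a b x); auto; [left|right]; auto). subst; contradiction. Qed.

Lemma in_zrange K z : In z (zrange K) <-> (Z.abs z <= Z.of_nat K)%Z.
Proof. unfold zrange. rewrite in_map_iff. split.
  - intros [n [<- Hn]]. apply in_seq in Hn. lia.
  - intros H. exists (Z.to_nat (z + Z.of_nat K)). split. lia. apply in_seq. lia. Qed.

Lemma nodup_zrange K : NoDup (zrange K).
Proof. unfold zrange. apply nodup_map_inj. intros; lia. apply seq_NoDup. Qed.

Lemma in_box_iff d K x : In x (box d K) <-> length x = d /\ in_box K x.
Proof. revert x. induction d; intros x; simpl.
  - split. intros [<-|[]]. split; auto; constructor.
    intros [H _]. destruct x; [auto|discriminate].
  - rewrite in_flat_map. split.
    + intros [z [Hz Hx]]. apply in_map_iff in Hx. destruct Hx as [x' [<- Hx']].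
      apply IHd in Hx'. destruct Hx'. simpl. split; auto. constructor; auto. apply in_zrange; auto.
    + intros [Hl Hb]. destruct x as [|z x']; [discriminate|]. inversion Hb; subst.
      exists z. split. apply in_zrange; auto. apply in_map. apply IHd. split; auto.
Qed.

Lemma nodup_box d K : NoDup (box d K).
Proof. induction d; simpl. constructor; auto. constructor.
  apply nodup_flat_map. apply nodup_zrange.
  intros; apply nodup_map_inj; auto. intros x y _ _ E; inversion E; auto.
  intros a b x _ _ Ha Hb. apply in_map_iff in Ha, Hb. destruct Ha as [? [<- _]]. destruct Hb as [? [E _]].
  inversion E; auto. Qed.

Lemma box_valid d K x : In x (box d K) -> valid_site d x.
Proof. intros H; apply in_box_iff in H; apply H. Qed.

Lemma origin_len d : length (origin d) = d.
Proof. unfold origin. apply repeat_length. Qed.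

Lemma origin_in_box d K : In (origin d) (box d K).
Proof. apply in_box_iff. split. apply origin_len. unfold in_box, origin.
  apply Forall_forall. intros z Hz. apply repeat_spec in Hz. subst. lia. Qed.

Lemma vadd_len x y : length x = length y -> length (vadd x y) = length x.
Proof. revert y; induction x; intros [|b y] H; simpl in *; try discriminate; auto. Qed.

Lemma vadd_assoc x y z : length x = length y -> length y = length z ->
  vadd (vadd x y) z = vadd x (vadd y z).
Proof. revert y z; induction x; intros [|b y] [|c z] H1 H2; simpl in *; try discriminate; auto.
  f_equal. lia. apply IHx; lia. Qed.

Lemma vadd_origin_r x : vadd x (origin (length x)) = x.
Proof. induction x; simpl; auto. f_equal; auto. lia. Qed.

Lemma vadd_origin_l x : vadd (origin (length x)) x = x.
Proof. induction x; simpl; auto. f_equal; auto. Qed.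

Lemma vadd_cancel w z z' : length w = length z -> length w = length z' ->
  vadd w z = vadd w z' -> z = z'.
Proof. revert z z'; induction w; intros [|b z] [|c z'] H1 H2 E; simpl in *; try discriminate; auto.
  inversion E. f_equal. lia. apply IHw; auto. Qed.

Lemma vadd_eq_self x y : length x = length y -> vadd x y = x -> y = origin (length x).
Proof. intros H E. apply (vadd_cancel x); [auto | rewrite origin_len; auto | rewrite E, vadd_origin_r; auto]. Qed.

Lemma vadd_in_box a b x y : length x = length y -> in_box a x -> in_box b y -> in_box (a + b) (vadd x y).
Proof. unfold in_box. revert y; induction x; intros [|c y] H Hx Hy; simpl in *; try discriminate; auto.
  inversion Hx; inversion Hy; subst. constructor. lia. apply IHx; auto. Qed.

Lemma vneg_len x : length (vneg x) = length x.
Proof. unfold vneg; apply length_map. Qed.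

Lemma vneg_vneg x : vneg (vneg x) = x.
Proof. unfold vneg. rewrite map_map. induction x; simpl; auto. f_equal; auto. lia. Qed.

Lemma vneg_in_box K x : in_box K x -> in_box K (vneg x).
Proof. unfold in_box, vneg. rewrite !Forall_forall. intros H z Hz. apply in_map_iff in Hz.
  destruct Hz as [w [<- Hw]]. specialize (H w Hw). lia. Qed.

Lemma vneg_vadd x y : vneg (vadd x y) = vadd (vneg x) (vneg y).
Proof. revert y; induction x; intros [|b y]; simpl; auto. f_equal; auto. lia. Qed.

Lemma vneg_origin d : vneg (origin d) = origin d.
Proof. unfold vneg, origin. induction d; simpl; auto. rewrite IHd. reflexivity. Qed.

Lemma vneg_box d K x : In x (box d K) -> In (vneg x) (box d K).
Proof. intros H. apply in_box_iff in H. apply in_box_iff. rewrite vneg_len. destruct H; split; auto.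
  apply vneg_in_box; auto. Qed.

Lemma box_perm_vneg d K : Permutation (map vneg (box d K)) (box d K).
Proof. apply Permutation_map_same_l. apply nodup_map_inj. intros x y _ _ E.
  rewrite <- (vneg_vneg x), <- (vneg_vneg y), E; auto. apply nodup_box.
  intros x Hx. apply in_map_iff in Hx. destruct Hx as [y [<- Hy]]. apply vneg_box; auto. Qed.

Lemma box_mono d K K' x : (K <= K')%nat -> In x (box d K) -> In x (box d K').
Proof. intros HK H. apply in_box_iff in H. apply in_box_iff. destruct H; split; auto.
  unfold in_box in *. rewrite Forall_forall in *. intros z Hz. specialize (H0 z Hz). lia. Qed.

Lemma box_add d a b x y : In x (box d a) -> In y (box d b) -> In (vadd x y) (box d (a + b)).
Proof. intros Hx Hy. apply in_box_iff in Hx, Hy. destruct Hx, Hy. apply in_box_iff. split.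
  rewrite vadd_len; lia.
  apply vadd_in_box; auto; lia. Qed.

Notation cf := (cfgs site_eq_dec).

Lemma configs_eq L : configs L = cf L.
Proof. induction L; simpl; auto. Qed.

Lemma fcoef_eq L g G : fcoef L g G = gcoef site_eq_dec L g G.
Proof. unfold fcoef, gcoef. rewrite configs_eq. reflexivity. Qed.

Lemma normM_eq M L g : normM M L g = gnorm site_eq_dec M L g.
Proof. unfold normM, gnorm. apply lsum_ext; intros. rewrite fcoef_eq. reflexivity. Qed.

Lemma lsum_support {A} (F : A -> R) l1 l2 : NoDup l1 -> NoDup l2 ->
  (forall x, In x l1 -> ~ In x l2 -> F x = 0) -> (forall x, In x l2 -> ~ In x l1 -> F x = 0) ->
  lsum F l1 = lsum F l2.
Proof.
  revert l2. induction l1 as [|a l1 IH]; intros l2 H1 H2 Ha Hb.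
  - rewrite lsum_nil. rewrite (lsum_ext _ (fun _ => 0)). rewrite lsum_zero; auto.
    intros; apply Hb; auto.
  - inversion H1; subst. rewrite lsum_cons. destruct (classic (In a l2)) as [Hin|Hnin].
    + destruct (in_split _ _ Hin) as [p [q ->]].
      assert (Hp : Permutation (p ++ a :: q) (a :: p ++ q)) by (symmetry; apply Permutation_middle).
      rewrite (lsum_perm _ _ _ Hp), lsum_cons. f_equal.
      assert (Hn2 : NoDup (a :: p ++ q)) by (apply (Permutation_NoDup Hp); auto).
      inversion Hn2; subst.
      apply IH; auto.
      * intros x Hx Hx'. apply Ha. right; auto. intro Hx2. apply (Permutation_in _ Hp) in Hx2.
        destruct Hx2 as [<-|]; auto.
      * intros x Hx Hx'. apply Hb. apply (Permutation_in _ (Permutation_sym Hp)). right; auto.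
        intros Hc; destruct Hc as [<-|]; auto.
    + rewrite Ha by (auto using in_eq). rewrite Rplus_0_l. apply IH; auto.
      * intros x Hx Hx'. apply Ha; auto. right; auto.
      * intros x Hx Hx'. apply Hb; auto. intros Hc; destruct Hc as [<-|]; auto.
Qed.

Lemma sum_vneg (F : Site -> R) U : NoDup U -> (forall u, ~ In u U -> F u = 0) ->
  (forall u, ~ In (vneg u) U -> F u = 0) ->
  lsum (fun u => F (vneg u)) U = lsum F U.
Proof. intros Hn HF HF2. rewrite <- (lsum_map F vneg). apply lsum_support; auto.
  apply nodup_map_inj; auto. intros x y _ _ E. rewrite <- (vneg_vneg x), <- (vneg_vneg y), E; auto.
  intros x Hx Hx'. apply HF2. intro H. apply Hx'. rewrite <- (vneg_vneg x). apply in_map; auto. Qed.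

Lemma sym_neg Q a b : sym_stoch Q -> Q (negb a) (negb b) = Q a b.
Proof. intros [H0 [H1 H2]]. pose proof (H1 true); pose proof (H1 false).
  destruct a, b; simpl; lra. Qed.

Lemma sym_neg2 Q a b : sym_stoch Q -> Q a (negb b) = Q (negb a) b.
Proof. intros H. rewrite <- (sym_neg Q a (negb b) H). rewrite Bool.negb_involutive. auto. Qed.

Definition phi (s : Config) : Config := fun x => negb (s (vneg x)).

Lemma phi_phi s : phi (phi s) = s.
Proof. apply functional_extensionality; intro x. unfold phi. rewrite vneg_vneg, Bool.negb_involutive. auto. Qed.

Lemma gdep_box_phi d K F : gdep (box d K) F -> gdep (box d K) (fun s => F (phi s)).
Proof. intros H s s' Hs. apply H. intros x Hx. unfold phi. f_equal. apply Hs. apply vneg_box; auto. Qed.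

Lemma phi_sum d K F : gdep (box d K) F ->
  lsum F (cf (box d K)) = lsum (fun s => F (phi s)) (cf (box d K)).
Proof.
  intros HF. rewrite (flip_sum site_eq_dec _ F HF).
  set (F' := fun s : Config => F (fun x => negb (s x))).
  assert (HF' : gdep (box d K) F').
  { intros s s' Hs. unfold F'. apply HF. intros x Hx. rewrite Hs; auto. }
  change (lsum F' (cf (box d K)) = lsum (fun s => F' (fun x => s (vneg x))) (cf (box d K))).
  pose proof (reindex site_eq_dec vneg (fun _ _ => /2) (box d K) F' (nodup_box d K)) as R.
  rewrite (cfgs_perm site_eq_dec _ _ _ (box_perm_vneg d K)) in R.
  assert (Hi : forall x y, In x (box d K) -> In y (box d K) -> vneg x = vneg y -> x = y).
  { intros x y _ _ E. rewrite <- (vneg_vneg x), <- (vneg_vneg y), E; auto. }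
  specialize (R Hi HF'). rewrite !lsum_scal in R.
  assert (Hp : 0 < lprod (fun _ : Site => /2) (box d K)).
  { clear. induction (box d K); simpl; unfold lprod in *; simpl; lra. }
  apply Rmult_eq_reg_l in R; [|lra]. auto.
Qed.

Definition Qsel d (Q0 Q1 : bool -> bool -> R) (y : Site) : bool -> bool -> R :=
  if site_eq_dec y (origin d) then Q1 else Q0.

Definition Inner d Q0 Q1 K (g : Config -> R) (u : Site) (e : Config) : R :=
  lsum (fun s => g s * lprod (fun x => Qsel d Q0 Q1 (vadd u x) (e (vadd u x)) (s x)) (box d K)) (cf (box d K)).

Lemma Top_eq d U P0 c eps Q0 Q1 K g e :
  Top d U P0 c eps Q0 Q1 K g e =
  lsum (fun u => (P0 u + eps * c u * sg (e (origin d))) * Inner d Q0 Q1 K g u e) U.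
Proof. unfold Top, Inner. apply lsum_ext; intros. rewrite configs_eq. reflexivity. Qed.

Lemma Top_lin d U P0 c eps Q0 Q1 K g1 g2 a b e :
  Top d U P0 c eps Q0 Q1 K (fun s => a * g1 s + b * g2 s) e =
  a * Top d U P0 c eps Q0 Q1 K g1 e + b * Top d U P0 c eps Q0 Q1 K g2 e.
Proof. rewrite !Top_eq. rewrite <- !lsum_scal, <- lsum_plus. apply lsum_ext; intros u _.
  unfold Inner.
  rewrite (lsum_ext (fun s => (a * g1 s + b * g2 s) * _) (fun s => a * (g1 s * lprod (fun x => Qsel d Q0 Q1 (vadd u x) (e (vadd u x)) (s x)) (box d K)) + b * (g2 s * lprod (fun x => Qsel d Q0 Q1 (vadd u x) (e (vadd u x)) (s x)) (box d K)))) by (intros; lra).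
  rewrite lsum_plus, !lsum_scal. lra. Qed.

Lemma Top_ext d U P0 c eps Q0 Q1 K g1 g2 e : (forall s, g1 s = g2 s) ->
  Top d U P0 c eps Q0 Q1 K g1 e = Top d U P0 c eps Q0 Q1 K g2 e.
Proof. intros H. replace g2 with g1; auto. apply functional_extensionality; auto. Qed.

Lemma Qsel_rows d Q0 Q1 y a : sym_stoch Q0 -> sym_stoch Q1 -> Qsel d Q0 Q1 y a true + Qsel d Q0 Q1 y a false = 1.
Proof. intros [_ [H0 _]] [_ [H1 _]]. unfold Qsel. destruct site_eq_dec; auto. Qed.

Lemma Inner_const d Q0 Q1 K a u e : sym_stoch Q0 -> sym_stoch Q1 ->
  Inner d Q0 Q1 K (fun _ => a) u e = a.
Proof. intros H0 H1. unfold Inner. rewrite lsum_scal.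
  rewrite (sum_weights site_eq_dec (fun x b => Qsel d Q0 Q1 (vadd u x) (e (vadd u x)) b)). lra.
  apply nodup_box. intros; apply Qsel_rows; auto. Qed.

Lemma sum_c_zero U (c : Site -> R) : NoDup U -> (forall u, ~ In u U -> c u = 0) ->
  (forall u, c (vneg u) = - c u) -> lsum c U = 0.
Proof. intros Hn Hs Ho.
  assert (E : lsum (fun u => c (vneg u)) U = lsum c U).
  { apply sum_vneg; auto. intros u Hu. rewrite <- (vneg_vneg u), Ho, Hs; auto. lra. }
  rewrite (lsum_ext _ (fun u => - c u)) in E by (intros; apply Ho). rewrite lsum_opp in E. lra. Qed.

Lemma Top_const d U P0 c eps Q0 Q1 K a e :
  NoDup U -> lsum P0 U = 1 -> (forall u, ~ In u U -> c u = 0) -> (forall u, c (vneg u) = - c u) ->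
  sym_stoch Q0 -> sym_stoch Q1 ->
  Top d U P0 c eps Q0 Q1 K (fun _ => a) e = a.
Proof. intros Hn HP Hs Ho H0 H1. rewrite Top_eq.
  rewrite (lsum_ext _ (fun u => a * P0 u + (a * eps * sg (e (origin d))) * c u)).
  rewrite lsum_plus, !lsum_scal, HP, sum_c_zero; auto. lra.
  intros u _. rewrite Inner_const; auto. lra. Qed.

Lemma U_box d U Rr : (forall u, In u U -> valid_site d u /\ in_box Rr u) -> forall u, In u U -> In u (box d Rr).
Proof. intros H u Hu. apply in_box_iff. apply H; auto. Qed.

Lemma Top_dep d U Rr P0 c eps Q0 Q1 K g :
  (forall u, In u U -> valid_site d u /\ in_box Rr u) ->
  gdep (box d (K + Rr)) (Top d U P0 c eps Q0 Q1 K g).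
Proof. intros HU e e' He. rewrite !Top_eq. apply lsum_ext; intros u Hu.
  rewrite (He (origin d)) by apply origin_in_box. f_equal. unfold Inner. apply lsum_ext; intros s _.
  f_equal. apply lprod_ext; intros x Hx. rewrite He; auto.
  rewrite Nat.add_comm. apply box_add; auto. apply (U_box d U Rr HU); auto. Qed.

Lemma Qsel_vneg d Q0 Q1 w : Qsel d Q0 Q1 (vneg w) = Qsel d Q0 Q1 w.
Proof. unfold Qsel. destruct (site_eq_dec (vneg w) (origin d)) as [E|E], (site_eq_dec w (origin d)) as [E'|E']; auto.
  - exfalso. apply E'. rewrite <- (vneg_vneg w), E, vneg_origin. auto.
  - exfalso. apply E. rewrite E', vneg_origin; auto. Qed.

Lemma Top_phi d U Rr P0 c eps Q0 Q1 K g e :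
  NoDup U -> (forall u, In u U -> valid_site d u /\ in_box Rr u) ->
  (forall u, ~ In u U -> P0 u = 0 /\ c u = 0) -> (forall u, P0 (vneg u) = P0 u) ->
  (forall u, c (vneg u) = - c u) -> sym_stoch Q0 -> sym_stoch Q1 -> gdep (box d K) g ->
  Top d U P0 c eps Q0 Q1 K g (phi e) = Top d U P0 c eps Q0 Q1 K (fun s => g (phi s)) e.
Proof.
  intros Hn HU Hs HPe Hco H0 H1 Hg. rewrite !Top_eq. symmetry.
  rewrite <- (sum_vneg (fun u => (P0 u + eps * c u * sg (e (origin d))) * Inner d Q0 Q1 K (fun s => g (phi s)) u e)); auto.
  2: { intros u Hu. destruct (Hs u Hu) as [-> ->]. lra. }
  2: { intros u Hu. destruct (Hs _ Hu) as [E1 E2]. rewrite HPe in E1. rewrite Hco in E2.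
       rewrite E1. replace (c u) with 0 by lra. lra. }
  apply lsum_ext; intros u Hu. f_equal.
  - rewrite HPe, Hco. unfold phi. rewrite vneg_origin, sg_neg. lra.
  - unfold Inner.
    set (P := fun s : Config => lprod (fun x => Qsel d Q0 Q1 (vadd (vneg u) x) (e (vadd (vneg u) x)) (s x)) (box d K)).
    change (lsum (fun s => g (phi s) * P s) (cf (box d K)) =
            lsum (fun s => g s * lprod (fun x => Qsel d Q0 Q1 (vadd u x) (phi e (vadd u x)) (s x)) (box d K)) (cf (box d K))).
    assert (GD : gdep (box d K) (fun s => g (phi s) * P s)).
    { intros s s' Hss. f_equal. apply (gdep_box_phi d K g Hg); auto.
      unfold P. apply lprod_ext; intros x Hx. rewrite Hss; auto. }
    etransitivity; [apply (phi_sum d K (fun s => g (phi s) * P s) GD)|].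
    apply lsum_ext; intros s _. rewrite phi_phi. f_equal. unfold P.
    rewrite <- (lprod_perm _ _ _ (box_perm_vneg d K)), lprod_map.
    apply lprod_ext; intros x Hx. rewrite <- vneg_vadd, Qsel_vneg.
    unfold phi at 1. rewrite vneg_vneg. rewrite (sym_neg2 _ _ _ ). 2: { unfold Qsel; destruct site_eq_dec; auto. }
    unfold phi. reflexivity.
Qed.

Lemma lsum_conf (F : Config -> R) l : @lsum Config F l = @lsum (Site -> bool) F l.
Proof. reflexivity. Qed.

Definition sgE (gam : list nat) (t d : nat) (e : Config) : R :=
  if in_dec Nat.eq_dec t gam then sg (e (origin d)) else 1.

Fixpoint Hc d U Rr P0 c eps Q0 Q1 (gam : list nat) (k t : nat) : Config -> R :=
  match k with
  | O => fun e => sgE gam t d e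
  | S k' => fun e => sgE gam t d e * Top d U P0 c eps Q0 Q1 (Rr * S k') (Hc d U Rr P0 c eps Q0 Q1 gam k' (S t)) e
  end.

Definition Pt (gam : list nat) (t : nat) (hist : nat -> bool) : R :=
  lprod (fun s => if Nat.ltb s t then sg (hist s) else 1) gam.

Definition tau (x : Site) (xi : Config) : Config := fun y => xi (vadd x y).

Lemma sgE_dep gam t d K : gdep (box d K) (sgE gam t d).
Proof. intros e e' H. unfold sgE. rewrite (H (origin d)) by apply origin_in_box. auto. Qed.

Lemma Hc_dep d U Rr P0 c eps Q0 Q1 gam k t :
  (forall u, In u U -> valid_site d u /\ in_box Rr u) ->
  gdep (box d (Rr * S k)) (Hc d U Rr P0 c eps Q0 Q1 gam k t).
Proof. intros HU. revert t. induction k; intros t e e' H; simpl Hc.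
  - apply (sgE_dep gam t d (Rr * 1)); auto.
  - rewrite (sgE_dep gam t d (Rr * S (S k)) e e' H). f_equal.
    apply (Top_dep d U Rr); auto. replace (Rr * S k + Rr)%nat with (Rr * S (S k))%nat by lia. auto. Qed.

Lemma exists_rest (A B : list Site) : NoDup A -> NoDup B -> incl A B ->
  exists R, Permutation B (A ++ R) /\ NoDup (A ++ R).
Proof. intros HA HB Hi.
  set (R := filter (fun y => if in_dec site_eq_dec y A then false else true) B).
  assert (HN : NoDup (A ++ R)).
  { apply NoDup_app; auto. apply NoDup_filter; auto.
    intros a Ha Hr. unfold R in Hr. apply filter_In in Hr. destruct Hr as [_ Hr].
    destruct (in_dec site_eq_dec a A); congruence. }
  exists R. split; auto. apply NoDup_Permutation; auto. intros y. rewrite in_app_iff. unfold R.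
  rewrite filter_In. split.
  - intros Hy. destruct (in_dec site_eq_dec y A); auto.
  - intros [Hy|[Hy _]]; auto. Qed.

Lemma lprod_indicator (gam : list nat) t a : NoDup gam ->
  lprod (fun s => if Nat.eqb s t then a else 1) gam = if in_dec Nat.eq_dec t gam then a else 1.
Proof. induction gam as [|b gam IH]; intros Hn.
  - rewrite lprod_nil. destruct (in_dec Nat.eq_dec t []) as [[]|]; auto.
  - inversion Hn; subst. rewrite lprod_cons, IH by auto.
    destruct (in_dec Nat.eq_dec t (b :: gam)) as [Hi|Hi], (in_dec Nat.eq_dec t gam) as [Hj|Hj];
      destruct (Nat.eqb_spec b t); subst; try contradiction; try lra.
    all: first [ exfalso; apply Hi; simpl; auto | exfalso; destruct Hi as [E|E]; [congruence|contradiction] ]. Qed.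

Lemma Pt_step gam t hist v : NoDup gam ->
  Pt gam (S t) (updn hist t v) = Pt gam t hist * (if in_dec Nat.eq_dec t gam then sg v else 1).
Proof. intros Hn. unfold Pt. rewrite <- lprod_indicator by auto. rewrite <- lprod_mult.
  apply lprod_ext; intros s _. unfold updn.
  destruct (Nat.ltb_spec s (S t)), (Nat.ltb_spec s t), (Nat.eqb_spec s t); subst; try lia; lra. Qed.

Lemma marg_link d Rr Q0 Q1 K a N x u xi F :
  sym_stoch Q0 -> sym_stoch Q1 -> In x (box d a) -> In u (box d Rr) -> (a + Rr + K <= N)%nat ->
  gdep (box d K) F ->
  lsum (fun xi' : Config => lprod (fun y => (if site_eq_dec y x then Q1 else Q0) (xi y) (xi' y)) (box d N) *
                 F (tau (vadd x u) xi')) (configs (box d N)) =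
  Inner d Q0 Q1 K F u (tau x xi).
Proof.
  intros HQ0 HQ1 Hx Hu HN HF.
  pose proof (box_valid _ _ _ Hx) as Vx. pose proof (box_valid _ _ _ Hu) as Vu.
  unfold valid_site in *.
  set (L := box d K). set (psi := fun z => vadd (vadd x u) z).
  assert (Hinj : forall z z', In z L -> In z' L -> psi z = psi z' -> z = z').
  { intros z z' Hz Hz' E. apply box_valid in Hz, Hz'. unfold valid_site in *. apply (vadd_cancel (vadd x u)); auto.
    rewrite vadd_len; lia. rewrite vadd_len; lia. }
  assert (Hincl : incl (map psi L) (box d N)).
  { intros y Hy. apply in_map_iff in Hy. destruct Hy as [z [<- Hz]]. unfold psi.
    apply (box_mono d (a + Rr + K)); auto. apply box_add; auto. apply box_add; auto. }
  assert (HnL : NoDup (map psi L)) by (apply nodup_map_inj; auto; apply nodup_box).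
  destruct (exists_rest _ _ HnL (nodup_box d N) Hincl) as [R [HP HnR]].
  set (q := fun y b => (if site_eq_dec y x then Q1 else Q0) (xi y) b).
  rewrite configs_eq, lsum_conf.
  change (lsum (fun xi' : Site -> bool => lprod (fun y => q y (xi' y)) (box d N) * F (fun z => xi' (psi z))) (cf (box d N)) =
          Inner d Q0 Q1 K F u (tau x xi)).
  rewrite (lsum_ext _ (fun xi' => lprod (fun y => q y (xi' y)) (map psi L ++ R) * F (fun z => xi' (psi z))))
    by (intros; rewrite (lprod_perm _ _ _ HP); auto).
  rewrite (cfgs_perm site_eq_dec _ _ _ HP).
  rewrite (marginal site_eq_dec q (map psi L) R); auto.
  2: { intros y. unfold q. destruct site_eq_dec; [apply HQ1|apply HQ0]. }
  2: { intros s s' Hs. apply HF. intros z Hz. apply Hs. apply in_map; auto. }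
  rewrite (lsum_ext _ (fun xi' => lprod (fun z => q (psi z) (xi' (psi z))) L * F (fun z => xi' (psi z))))
    by (intros; rewrite lprod_map; auto).
  rewrite (reindex site_eq_dec psi q L F (nodup_box d K) Hinj HF).
  unfold Inner. apply lsum_ext; intros s _. rewrite Rmult_comm. f_equal.
  apply lprod_ext; intros z Hz. apply box_valid in Hz. unfold valid_site in Hz.
  unfold q, psi, tau, Qsel. rewrite vadd_assoc by lia.
  destruct (site_eq_dec (vadd x (vadd u z)) x) as [E|E], (site_eq_dec (vadd u z) (origin d)) as [E'|E']; auto.
  - exfalso. apply E'. apply vadd_eq_self in E. rewrite E. f_equal; lia. rewrite vadd_len; lia.
  - exfalso. apply E. rewrite E'. rewrite <- Vx. apply vadd_origin_r.
Qed.

Lemma tau_origin x xi d : length x = d -> tau x xi (origin d) = xi x.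
Proof. intros H. unfold tau. rewrite <- H, vadd_origin_r. auto. Qed.

Lemma Ev_link d U Rr P0 c eps Q0 Q1 m gam :
  (forall u, In u U -> valid_site d u /\ in_box Rr u) -> sym_stoch Q0 -> sym_stoch Q1 ->
  NoDup gam -> (forall s, In s gam -> (s < m)%nat) ->
  forall k t hist x xi, (t + k + 1 = m)%nat -> In x (box d (Rr * t)) ->
  Ev d U P0 c eps Q0 Q1 (box d (Rr * m)) (Psi gam) k t hist x xi =
  Pt gam t hist * Hc d U Rr P0 c eps Q0 Q1 gam k t (tau x xi).
Proof.
  intros HU HQ0 HQ1 Hn Hm. induction k; intros t hist x xi Ht Hx.
  - pose proof (box_valid _ _ _ Hx) as Vx. unfold valid_site in Vx.
    cbn [Ev Hc]. unfold sgE. rewrite tau_origin by auto. unfold Psi.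
    rewrite <- (lprod_indicator gam t (sg (xi x)) Hn). unfold Pt. rewrite <- lprod_mult.
    apply lprod_ext; intros s Hs. specialize (Hm s Hs). unfold updn.
    destruct (Nat.ltb_spec s t), (Nat.eqb_spec s t); subst; try lia; lra.
  - pose proof (box_valid _ _ _ Hx) as Vx. unfold valid_site in Vx.
    cbn [Ev Hc]. rewrite Top_eq. rewrite <- !lsum_scal. apply lsum_ext; intros u Hu.
    assert (Hub : In u (box d Rr)) by (apply in_box_iff; apply HU; auto).
    rewrite (lsum_ext _ (fun xi' : Config => Pt gam (S t) (updn hist t (xi x)) *
         (lprod (fun y => (if site_eq_dec y x then Q1 else Q0) (xi y) (xi' y)) (box d (Rr * m)) *
          Hc d U Rr P0 c eps Q0 Q1 gam k (S t) (tau (vadd x u) xi')))).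
    2: { intros xi' _. rewrite IHk; try lia. ring.
         replace (Rr * S t)%nat with (Rr * t + Rr)%nat by lia. apply box_add; auto. }
    rewrite lsum_scal.
    rewrite (marg_link d Rr Q0 Q1 (Rr * S k) (Rr * t) (Rr * m)); auto.
    2: { replace m with (t + S k + 1)%nat by lia. nia. }
    2: { apply Hc_dep; auto. }
    rewrite Pt_step by auto. unfold sgE. rewrite tau_origin by auto. ring.
Qed.

Fixpoint revseq (m : nat) : list nat := match m with O => [] | S m' => m' :: revseq m' end.

Lemma revseq_rev m : revseq m = rev (seq 0 m).
Proof. induction m; auto. cbn [revseq]. rewrite seq_S, rev_app_distr. simpl. rewrite IHm. auto. Qed.

Lemma in_revseq m t : In t (revseq m) <-> (t < m)%nat.
Proof. rewrite revseq_rev, <- in_rev, in_seq. lia. Qed.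

Lemma nodup_revseq m : NoDup (revseq m).
Proof. rewrite revseq_rev. apply NoDup_rev. apply seq_NoDup. Qed.

Lemma bseqs_eq m : bseqs m = cfgs Nat.eq_dec (revseq m).
Proof. induction m; simpl; auto. rewrite IHm. f_equal. apply functional_extensionality; intro z.
  unfold updn, gupd. f_equal; f_equal; apply functional_extensionality; intro n;
  destruct (Nat.eqb_spec n m), (Nat.eq_dec n m); congruence. Qed.

Lemma lsum_bool_fun (F : (nat -> bool) -> R) l : @lsum (nat -> bool) F l = lsum F l.
Proof. reflexivity. Qed.

Lemma walsh_inv m f z : depends_first m f ->
  f z = lsum (fun gam => wcoef m f gam * Psi gam z) (subsets (seq 0 m)).
Proof.
  intros Hf.
  assert (Hd : gdep (revseq m) f).
  { intros s s' H. apply Hf. intros t Ht. apply H. apply in_revseq; auto. }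
  rewrite (inversion Nat.eq_dec (revseq m) f z (nodup_revseq m) Hd).
  assert (Hw : forall G, gcoef Nat.eq_dec (revseq m) f G = wcoef m f G).
  { intros G. unfold gcoef, wcoef. rewrite bseqs_eq.
    replace (length (revseq m)) with m. reflexivity.
    rewrite revseq_rev, length_rev, length_seq. auto. }
  rewrite (lsum_ext _ (fun gam => wcoef m f gam * Psi gam z)) by (intros; rewrite Hw; auto).
  apply subsets_perm.
  - intros G G' HG. unfold wcoef, Psi. rewrite (lprod_perm _ _ _ HG). f_equal. f_equal.
    apply lsum_ext; intros. rewrite (lprod_perm _ _ _ HG). auto.
  - rewrite revseq_rev. apply Permutation_sym, Permutation_rev.
Qed.

Lemma Ev_sum {I} d U P0 c eps Q0 Q1 B (f : (nat -> bool) -> R) (h : I -> (nat -> bool) -> R) (a : I -> R) Is :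
  (forall z, f z = lsum (fun i => a i * h i z) Is) ->
  forall k t hist x xi,
  Ev d U P0 c eps Q0 Q1 B f k t hist x xi = lsum (fun i => a i * Ev d U P0 c eps Q0 Q1 B (h i) k t hist x xi) Is.
Proof.
  intros Hf. induction k; intros t hist x xi.
  - cbn [Ev]. apply Hf.
  - cbn [Ev].
    rewrite (lsum_ext (fun i => a i * _) (fun i => lsum (fun u => (P0 u + eps * c u * sg (xi x)) *
      lsum (fun xi' => a i * (lprod (fun y => (if site_eq_dec y x then Q1 else Q0) (xi y) (xi' y)) B *
         Ev d U P0 c eps Q0 Q1 B (h i) k (S t) (updn hist t (xi x)) (vadd x u) xi')) (configs B)) U)).
    + rewrite (lsum_swap _ Is U). apply lsum_ext; intros u _. rewrite lsum_scal. f_equal.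
      rewrite (lsum_swap _ Is (configs B)). apply lsum_ext; intros xi' _. rewrite IHk. rewrite <- lsum_scal.
      apply lsum_ext; intros; ring.
    + intros i _. rewrite <- lsum_scal. apply lsum_ext; intros u _.
      rewrite lsum_scal. ring.
Qed.

Lemma small_zero (x C mu : R) : 0 <= mu < 1 -> (forall n, Rabs x <= mu ^ n * C) -> x = 0.
Proof.
  intros Hmu H. destruct (Req_dec x 0) as [|Hx]; auto. exfalso.
  assert (Hpos : 0 < Rabs x) by (apply Rabs_pos_lt; auto).
  assert (HC : 0 < C). { specialize (H O). simpl in H. lra. }
  destruct (pow_lt_1_zero mu ltac:(rewrite Rabs_right; lra) (Rabs x / C)) as [N HN].
  apply Rdiv_lt_0_compat; auto.
  specialize (HN N (Nat.le_refl _)). specialize (H N). rewrite Rabs_right in HN.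
  2: { apply Rle_ge, pow_le; lra. }
  assert (mu ^ N * C < Rabs x / C * C) by (apply Rmult_lt_compat_r; auto).
  unfold Rdiv in H0. rewrite Rmult_assoc, Rinv_l, Rmult_1_r in H0 by lra. lra.
Qed.

Section Pi.
Variables (d : nat) (U : list Site) (Rr : nat) (P0 c : Site -> R) (eps : R)
  (Q0 Q1 : bool -> bool -> R) (M mubar : R) (piw : list Site -> Config -> R).
Hypothesis HnU : NoDup U.
Hypothesis HU : forall u, In u U -> valid_site d u /\ in_box Rr u.
Hypothesis Hs : forall u, ~ In u U -> P0 u = 0 /\ c u = 0.
Hypothesis HP1 : lsum P0 U = 1.
Hypothesis HPe : forall u, P0 (vneg u) = P0 u.
Hypothesis Hco : forall u, c (vneg u) = - c u.
Hypothesis HQ0 : sym_stoch Q0.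
Hypothesis HQ1 : sym_stoch Q1.
Hypothesis HM : 1 < M.
Hypothesis Hmu : 0 < mubar < 1.
Hypothesis Hpw0 : forall s, piw [] s = 1.
Hypothesis Hpwc : forall L y s, NoDup (y :: L) -> Forall (valid_site d) (y :: L) ->
     piw L s = piw (y :: L) (upd s y true) + piw (y :: L) (upd s y false).
Hypothesis Hpwn : forall L s, NoDup L -> Forall (valid_site d) L -> 0 <= piw L s.
Hypothesis Hinv : forall K g, depends_on (box d K) g ->
     integ piw (box d (K + Rr)) (Top d U P0 c eps Q0 Q1 K g) = integ piw (box d K) g.
Hypothesis Hcon : forall K g, depends_on (box d K) g -> integ piw (box d K) g = 0 ->
     normM M (box d (K + Rr)) (Top d U P0 c eps Q0 Q1 K g) <= mubar * normM M (box d K) g.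

Notation T := (Top d U P0 c eps Q0 Q1).
Notation nrm K g := (gnorm site_eq_dec M (box d K) g).
Notation I K g := (integ piw (box d K) g).

Lemma piw_sum_gen L : NoDup L -> Forall (valid_site d) L -> lsum (fun s : Site -> bool => piw L s) (cf L) = 1.
Proof. induction L; intros Hn Hv.
  - rewrite cfgs_nil. apply Hpw0.
  - rewrite cfgs_cons. rewrite (lsum_ext _ (piw L)).
    + inversion Hn; inversion Hv; subst. apply IHL; auto.
    + intros s _. symmetry. apply (Hpwc L a s); auto. Qed.

Lemma box_forall_valid K : Forall (valid_site d) (box d K).
Proof. apply Forall_forall. intros; eapply box_valid; eauto. Qed.

Lemma piw_sum K : lsum (fun s : Site -> bool => piw (box d K) s) (cf (box d K)) = 1.
Proof. apply piw_sum_gen. apply nodup_box. apply box_forall_valid. Qed.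

Lemma piw_nn K s : 0 <= piw (box d K) s.
Proof. apply Hpwn. apply nodup_box. apply box_forall_valid. Qed.

Lemma integ_eq K g : I K g = lsum (fun s : Site -> bool => g s * piw (box d K) s) (cf (box d K)).
Proof. unfold integ. rewrite configs_eq. reflexivity. Qed.

Lemma integ_lin K g1 g2 a b : I K (fun s => a * g1 s + b * g2 s) = a * I K g1 + b * I K g2.
Proof. rewrite !integ_eq. rewrite <- !lsum_scal, <- lsum_plus. apply lsum_ext; intros; lra. Qed.

Lemma integ_const K a : I K (fun _ => a) = a.
Proof. rewrite integ_eq, lsum_scal, piw_sum. lra. Qed.

Lemma integ_ext K g1 g2 : (forall s, g1 s = g2 s) -> I K g1 = I K g2.
Proof. intros H. replace g2 with g1; auto. apply functional_extensionality; auto. Qed.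

Lemma integ_sup K g B : (forall s, Rabs (g s) <= B) -> Rabs (I K g) <= B.
Proof. intros H. rewrite integ_eq. eapply Rle_trans; [apply lsum_abs|].
  rewrite <- (Rmult_1_r B), <- (piw_sum K), <- lsum_scal. apply lsum_le; intros s _.
  rewrite Rabs_mult, (Rabs_right (piw _ _)) by (apply Rle_ge, piw_nn).
  apply Rmult_le_compat_r; auto. apply piw_nn. Qed.

Lemma integ_abs K g : gdep (box d K) g -> Rabs (I K g) <= nrm K g.
Proof. intros Hg. apply integ_sup. intros s. apply sup_bound; auto. apply nodup_box. lra. Qed.

Fixpoint Tn (K n : nat) (g : Config -> R) : Config -> R :=
  match n with O => g | S n' => T (K + n' * Rr) (Tn K n' g) end.

Lemma Tn_dep K n g : gdep (box d K) g -> gdep (box d (K + n * Rr)) (Tn K n g).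
Proof. intros Hg. induction n; simpl.
  - replace (K + 0)%nat with K by lia. auto.
  - replace (K + (Rr + n * Rr))%nat with (K + n * Rr + Rr)%nat by lia. apply Top_dep; auto. Qed.

Lemma Tn_shift K n g a e : Tn K n (fun s => g s + a) e = Tn K n g e + a.
Proof. revert e. induction n; intros e; simpl; auto.
  rewrite (Top_ext _ _ _ _ _ _ _ _ _ (fun s => 1 * Tn K n g s + a * 1)) by (intros; rewrite IHn; lra).
  rewrite (Top_lin _ _ _ _ _ _ _ _ (Tn K n g) (fun _ => 1)).
  rewrite Top_const; auto. lra. intros u Hu; apply (Hs u Hu). Qed.

Lemma Tn_phi K n g e : gdep (box d K) g -> Tn K n (fun s => g (phi s)) e = Tn K n g (phi e).
Proof. intros Hg. revert e. induction n; intros e; simpl; auto.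
  rewrite (Top_phi d U Rr P0 c eps Q0 Q1 _ _ _ HnU HU Hs HPe Hco HQ0 HQ1 (Tn_dep K n g Hg)).
  apply Top_ext; intros; auto. Qed.

Lemma Tn_integ K n g : gdep (box d K) g -> I (K + n * Rr) (Tn K n g) = I K g.
Proof. intros Hg. induction n; simpl.
  - replace (K + 0)%nat with K by lia. auto.
  - replace (K + (Rr + n * Rr))%nat with (K + n * Rr + Rr)%nat by lia. rewrite Hinv; auto.
    apply Tn_dep; auto. Qed.

Lemma Tn_contract K n g : gdep (box d K) g -> I K g = 0 ->
  nrm (K + n * Rr) (Tn K n g) <= mubar ^ n * nrm K g.
Proof. intros Hg H0. induction n; simpl.
  - replace (K + 0)%nat with K by lia. lra.
  - replace (K + (Rr + n * Rr))%nat with (K + n * Rr + Rr)%nat by lia.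
    rewrite <- normM_eq. eapply Rle_trans. apply Hcon. apply Tn_dep; auto.
    rewrite (Tn_integ K n g Hg). auto.
    rewrite normM_eq. rewrite Rmult_assoc. apply Rmult_le_compat_l; lra. Qed.

Lemma integ_phi K g : gdep (box d K) g -> I K (fun s => g (phi s)) = I K g.
Proof.
  intros Hg. set (a := I K g). set (h := fun s => g s + - a).
  assert (Hh : gdep (box d K) h). { intros s s' E. unfold h. rewrite (Hg s s' E). auto. }
  assert (Ih : I K h = 0).
  { unfold h. rewrite (integ_ext K _ (fun s => 1 * g s + (- a) * 1)) by (intros; lra).
    rewrite integ_lin, integ_const. fold a. lra. }
  assert (Eg : g = fun s => h s + a). { apply functional_extensionality; intros; unfold h; lra. }
  cut (I K (fun s => g (phi s)) - a = 0). lra.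
  apply (small_zero _ (nrm K h) mubar). lra.
  intros n.
  assert (E1 : I K (fun s => g (phi s)) = I (K + n * Rr) (fun e => Tn K n h (phi e)) + a).
  { etransitivity; [symmetry; apply (Tn_integ K n (fun s => g (phi s))); apply gdep_box_phi; auto|].
    rewrite (integ_ext _ _ (fun e => 1 * Tn K n h (phi e) + a * 1)).
    rewrite integ_lin, integ_const. lra.
    intros e. rewrite Tn_phi by auto. rewrite Eg, Tn_shift. lra. }
  rewrite E1. unfold Rminus. rewrite Rplus_assoc, Rplus_opp_r, Rplus_0_r.
  eapply Rle_trans. apply integ_sup. intros e. apply (sup_bound site_eq_dec M). apply nodup_box. apply Tn_dep; auto. lra.
  apply Tn_contract; auto.
Qed.

Lemma integ_odd K g : gdep (box d K) g -> (forall s, g (phi s) = - g s) -> I K g = 0.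
Proof. intros Hg Ho. pose proof (integ_phi K g Hg) as E.
  rewrite (integ_ext K _ (fun s => (-1) * g s + 0 * g s)) in E by (intros; rewrite Ho; lra).
  rewrite integ_lin in E. lra. Qed.


Definition pm (j : nat) : R := if Nat.even j then 1 else -1.
Definition sst : R := mustar M mubar.
Definition alpha : R := M * (1 + 2 * mubar) / sst.

Lemma sst_pos : 0 < sst.
Proof. unfold sst, mustar. apply Rmult_lt_0_compat; [lra|]. apply sqrt_lt_R0. nra. Qed.

Lemma sst_sq : sst * sst = M * M * (mubar * (1 + 2 * mubar)).
Proof. unfold sst, mustar. rewrite <- (sqrt_sqrt (mubar * (1 + 2 * mubar))) at 3 by nra. ring. Qed.

Lemma alpha_s : alpha * sst = M * (1 + 2 * mubar).
Proof. unfold alpha. field. apply Rgt_not_eq, sst_pos. Qed.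

Lemma Mmu_alpha : M * mubar * alpha = sst.
Proof. pose proof sst_pos. apply (Rmult_eq_reg_r sst); [|lra].
  rewrite Rmult_assoc, alpha_s, sst_sq. ring. Qed.

Lemma alpha_pos : 0 < alpha.
Proof. unfold alpha. apply Rdiv_lt_0_compat. nra. apply sst_pos. Qed.

Definition Inv (h : Config -> R) (K j : nat) : Prop :=
  gdep (box d K) h /\ (forall e, h (phi e) = pm j * h e) /\
  (if Nat.even j then Rabs (I K h) <= sst ^ j /\ nrm K (fun e => h e + - I K h) <= 2 * sst ^ j
   else nrm K h <= alpha * sst ^ j).

Lemma nrm_minus K h a : nrm K (fun e => h e + - a) <= nrm K h + Rabs a.
Proof. rewrite (gnorm_ext site_eq_dec M _ _ (fun e => 1 * h e + (- a) * 1)) by (intros; ring).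
  eapply Rle_trans. apply gnorm_lin. lra. rewrite gnorm_const by apply nodup_box.
  rewrite Rabs_R1, Rabs_Ropp. lra. Qed.

Lemma nrm_plus_const K h a : nrm K (fun e => a + h e) <= Rabs a + nrm K h.
Proof. rewrite (gnorm_ext site_eq_dec M _ _ (fun e => a * 1 + 1 * h e)) by (intros; ring).
  eapply Rle_trans. apply gnorm_lin. lra. rewrite gnorm_const by apply nodup_box.
  rewrite Rabs_R1. lra. Qed.

Lemma pm_S j : pm (S j) = - pm j.
Proof. unfold pm. rewrite Nat.even_succ, <- Nat.negb_even. destruct (Nat.even j); simpl; lra. Qed.

Lemma nrm_nonneg K h : 0 <= nrm K h.
Proof. apply gnorm_nonneg. lra. Qed.

Lemma Inv_step (gam : list nat) t K h j :
  Inv h K j ->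
  Inv (fun e => sgE gam t d e * T K h e) (K + Rr) (if in_dec Nat.eq_dec t gam then S j else j).
Proof.
  intros [Hd [Hp Hb]].
  set (g := T K h).
  assert (Hgd : gdep (box d (K + Rr)) g) by (apply Top_dep; auto).
  assert (Hgp : forall e, g (phi e) = pm j * g e).
  { intros e. unfold g. rewrite (Top_phi d U Rr); auto.
    rewrite (Top_ext _ _ _ _ _ _ _ _ _ (fun s => pm j * h s + 0 * h s)) by (intros; rewrite Hp; ring).
    rewrite Top_lin. ring. }
  assert (Ho : In (origin d) (box d (K + Rr))) by apply origin_in_box.
  assert (HdS : gdep (box d (K + Rr)) (fun e => sg (e (origin d)) * g e)).
  { intros e e' E. rewrite (E (origin d) Ho), (Hgd e e' E). auto. }
  pose proof sst_pos as Hs0. pose proof alpha_pos as Ha0.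
  assert (Hsj : 0 < sst ^ j) by (apply pow_lt; auto).
  unfold sgE. destruct (in_dec Nat.eq_dec t gam) as [Hin|Hin].
  -
    split; [|split].
    + auto.
    + intros e. unfold phi at 1. rewrite vneg_origin, sg_neg. fold (phi e). rewrite Hgp, pm_S. ring.
    + rewrite Nat.even_succ, <- Nat.negb_even. destruct (Nat.even j) eqn:Ej; simpl.
      *
        destruct Hb as [Ha Hn].
        set (a := I K h) in *.
        assert (Eg : forall e, g e = a + T K (fun s => h s + - a) e).
        { intros e. unfold g. rewrite (Top_ext _ _ _ _ _ _ _ _ _ (fun s => 1 * (h s + - a) + a * 1)) by (intros; ring).
          rewrite Top_lin, Top_const; auto. ring. intros u Hu; apply (Hs u Hu). }
        assert (Hd' : gdep (box d K) (fun s => h s + - a)).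
        { intros s s' E. rewrite (Hd s s' E). auto. }
        assert (HI : I K (fun s => h s + - a) = 0).
        { rewrite (integ_ext K _ (fun s => 1 * h s + (-a) * 1)) by (intros; ring).
          rewrite integ_lin, integ_const. fold a. ring. }
        assert (Hc1 : nrm (K + Rr) (T K (fun s => h s + - a)) <= mubar * (2 * sst ^ j)).
        { rewrite <- normM_eq. eapply Rle_trans. apply Hcon; auto. rewrite normM_eq.
          apply Rmult_le_compat_l; [lra|]. exact Hn. }
        assert (Hg : nrm (K + Rr) g <= sst ^ j + mubar * (2 * sst ^ j)).
        { rewrite (gnorm_ext site_eq_dec M _ _ _ Eg). eapply Rle_trans. apply nrm_plus_const. lra. }
        eapply Rle_trans. apply gnorm_S. apply nodup_box. auto. lra.
        simpl pow. rewrite <- Rmult_assoc, alpha_s.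
        assert (0 <= M) by lra. nra.
      *
        assert (HI0 : I K h = 0).
        { apply integ_odd; auto. intros e. rewrite Hp. unfold pm. rewrite Ej. ring. }
        assert (Hg : nrm (K + Rr) g <= mubar * (alpha * sst ^ j)).
        { unfold g. rewrite <- normM_eq. eapply Rle_trans. apply Hcon; auto. rewrite normM_eq.
          apply Rmult_le_compat_l; lra. }
        assert (HS : nrm (K + Rr) (fun e => sg (e (origin d)) * g e) <= sst ^ S j).
        { eapply Rle_trans. apply gnorm_S. apply nodup_box. auto. lra.
          simpl pow. assert (0 <= M) by lra.
          replace (sst * sst ^ j) with (M * (mubar * (alpha * sst ^ j)))
            by (transitivity ((M * mubar * alpha) * sst ^ j); [ring|rewrite Mmu_alpha; ring]).
          apply Rmult_le_compat_l; lra. }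
        assert (HIa : Rabs (I (K + Rr) (fun e => sg (e (origin d)) * g e)) <= sst ^ S j).
        { eapply Rle_trans. apply integ_abs; auto. auto. }
        split; [exact HIa|]. eapply Rle_trans. apply nrm_minus.
        apply (Rle_trans _ (sst ^ S j + sst ^ S j)); [apply Rplus_le_compat; [exact HS | exact HIa] | simpl; lra].
  -
    assert (E1 : forall e, 1 * g e = g e) by (intros; ring).
    split; [|split].
    + intros e e' E. rewrite !E1. apply Hgd; auto.
    + intros e. rewrite !E1. apply Hgp.
    + rewrite (integ_ext _ (fun e => 1 * g e) g) by auto.
      rewrite (gnorm_ext site_eq_dec M (box d (K + Rr)) (fun e => 1 * g e + - I (K + Rr) g) (fun e => g e + - I (K + Rr) g)) by (intros; ring).
      destruct (Nat.even j) eqn:Ej.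
      * destruct Hb as [Ha Hn].
        set (a := I K h) in *.
        assert (Eg : forall e, g e = a + T K (fun s => h s + - a) e).
        { intros e. unfold g. rewrite (Top_ext _ _ _ _ _ _ _ _ _ (fun s => 1 * (h s + - a) + a * 1)) by (intros; ring).
          rewrite Top_lin, Top_const; auto. ring. intros u Hu; apply (Hs u Hu). }
        assert (Hd' : gdep (box d K) (fun s => h s + - a)).
        { intros s s' E. rewrite (Hd s s' E). auto. }
        assert (HI : I K (fun s => h s + - a) = 0).
        { rewrite (integ_ext K _ (fun s => 1 * h s + (-a) * 1)) by (intros; ring).
          rewrite integ_lin, integ_const. fold a. ring. }
        assert (Hc1 : nrm (K + Rr) (T K (fun s => h s + - a)) <= mubar * (2 * sst ^ j)).
        { rewrite <- normM_eq. eapply Rle_trans. apply Hcon; auto. rewrite normM_eq.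
          apply Rmult_le_compat_l; [lra|]. exact Hn. }
        assert (HIg : I (K + Rr) g = a). { unfold g. apply Hinv. auto. }
        rewrite HIg. split; auto.
        rewrite (gnorm_ext site_eq_dec M _ _ (T K (fun s => h s + - a))) by (intros; rewrite Eg; ring).
        nra.
      * rewrite (gnorm_ext site_eq_dec M _ (fun e => 1 * g e) g) by (intros; ring).
        unfold g. rewrite <- normM_eq. eapply Rle_trans. apply Hcon; auto.
        apply integ_odd; auto. intros e. rewrite Hp. unfold pm. rewrite Ej. ring.
        rewrite normM_eq. pose proof (nrm_nonneg K h). nra.
Qed.

Definition cnt (gam : list nat) (t k : nat) : nat :=
  length (filter (fun i => if in_dec Nat.eq_dec i gam then true else false) (seq t (S k))).

Lemma Hc_Inv gam k t : Inv (Hc d U Rr P0 c eps Q0 Q1 gam k t) (Rr * S k) (cnt gam t k).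
Proof.
  revert t. induction k; intros t.
  - cbn [Hc]. unfold cnt. simpl seq. simpl filter. unfold sgE.
    destruct (in_dec Nat.eq_dec t gam) as [Hin|Hin]; simpl length.
    + split; [|split].
      * intros e e' E. rewrite (E (origin d)) by apply origin_in_box. auto.
      * intros e. unfold phi. rewrite vneg_origin, sg_neg. unfold pm; simpl; ring.
      * simpl. rewrite (gnorm_ext site_eq_dec M _ _ (fun e => sg (e (origin d)) * (fun _ => 1) e)) by (intros; ring).
        eapply Rle_trans. apply gnorm_S. apply nodup_box. apply origin_in_box. lra.
        rewrite gnorm_const by apply nodup_box. rewrite Rabs_R1. pose proof alpha_s. nra.
    + split; [|split].
      * intros e e' E. auto.
      * intros e. unfold pm; simpl; ring.
      * simpl. rewrite integ_const. rewrite Rabs_R1. split; [lra|].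
        rewrite (gnorm_ext site_eq_dec M _ _ (fun _ => 0)) by (intros; ring).
        rewrite gnorm_const by apply nodup_box. rewrite Rabs_R0. lra.
  - pose proof (Inv_step gam t (Rr * S k) _ _ (IHk (S t))) as H.
    replace (Rr * S (S k))%nat with (Rr * S k + Rr)%nat by lia.
    replace (cnt gam t (S k)) with (if in_dec Nat.eq_dec t gam then S (cnt gam (S t) k) else cnt gam (S t) k).
    exact H.
    unfold cnt. change (seq t (S (S k))) with (t :: seq (S t) (S k)). simpl filter.
    destruct (in_dec Nat.eq_dec t gam); simpl; auto.
Qed.

Lemma Inv_bound h K j : Inv h K j -> nrm K h <= (alpha + 3) * sst ^ j.
Proof.
  intros [Hd [Hp Hb]]. pose proof alpha_pos. pose proof sst_pos.
  assert (0 < sst ^ j) by (apply pow_lt; auto).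
  destruct (Nat.even j).
  - destruct Hb as [Ha Hn].
    rewrite (gnorm_ext site_eq_dec M _ h (fun e => I K h + (h e + - I K h))) by (intros; ring).
    eapply Rle_trans. apply nrm_plus_const.
    apply (Rle_trans _ (sst ^ j + 2 * sst ^ j)); [apply Rplus_le_compat; [exact Ha|exact Hn]|nra].
  - nra.
Qed.

End Pi.

Lemma fold_max_ge (l : list R) x : In x l -> x <= fold_right Rmax 0 l.
Proof. induction l; simpl; [contradiction|]. intros [<-|H]. apply Rmax_l.
  eapply Rle_trans; [apply IHl; auto|apply Rmax_r]. Qed.

Lemma fold_max_nn (l : list R) : 0 <= fold_right Rmax 0 l.
Proof. induction l; simpl; [lra|]. eapply Rle_trans; [apply IHl|apply Rmax_r]. Qed.

Lemma subsets_pow {A} (l : list A) x : lsum (fun G => x ^ length G) (subsets l) = (1 + x) ^ length l.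
Proof. induction l; cbn [subsets]. rewrite lsum_cons, lsum_nil. simpl; lra.
  rewrite lsum_app, lsum_map, IHl. simpl length.
  rewrite (lsum_ext (fun a0 => x ^ length (a :: a0)) (fun G => x * x ^ length G)) by (intros; reflexivity).
  rewrite lsum_scal, IHl. simpl. ring. Qed.

Lemma cnt_len gam m : NoDup gam -> incl gam (seq 0 m) -> (1 <= m)%nat -> cnt gam 0 (m - 1) = length gam.
Proof. intros Hn Hi Hm. unfold cnt. replace (S (m - 1)) with m by lia.
  apply Permutation_length. apply NoDup_Permutation.
  - apply NoDup_filter, seq_NoDup.
  - auto.
  - intros x. rewrite filter_In. split.
    + intros [_ H]. destruct (in_dec Nat.eq_dec x gam); congruence.
    + intros H. split. apply Hi; auto. destruct (in_dec Nat.eq_dec x gam); congruence. Qed.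

Theorem lemma1 (d : nat) (U : list Site) (Rr : nat) (P0 c : Site -> R) (eps : R)
    (Q0 Q1 : bool -> bool -> R) (M mubar : R) (piw : list Site -> Config -> R)
    (Hmodel : model_hyp d U Rr P0 c eps Q0 Q1)
    (Hstand : standing_hyp d U Rr P0 c eps Q0 Q1 M mubar piw) :
  exists C : R, 0 < C /\
    forall (m : nat) (f : (nat -> bool) -> R),
      (1 <= m)%nat -> depends_first m f ->
      depends_on (box d (Rr * m)) (Gf d U Rr P0 c eps Q0 Q1 m f) /\
      normM M (box d (Rr * m)) (Gf d U Rr P0 c eps Q0 Q1 m f)
        <= C * maxcoef m f * (1 + mustar M mubar) ^ m.
Proof.
  destruct Hmodel as [Hd [HnU [HU [Hs [HPn [HP1 [HPe [_ [_ [Hco [Heps [_ [HQ0 [HQ1 _]]]]]]]]]]]]]].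
  destruct Hstand as [HM [Hmu [Hpw0 [_ [_ [Hpwc [[Kd Hdens] [Hinv [_ Hcon]]]]]]]]].
  assert (Hpwn : forall L s, NoDup L -> Forall (valid_site d) L -> 0 <= piw L s)
    by (intros L s H1 H2; apply (Hdens L s H1 H2)).
  pose proof (alpha_pos M mubar HM Hmu) as Ha.
  exists (alpha M mubar + 3). split; [lra|].
  intros m f Hm Hf.
  set (HC := fun gam => Hc d U Rr P0 c eps Q0 Q1 gam (m - 1) 0).
  assert (Egf : forall e, Gf d U Rr P0 c eps Q0 Q1 m f e =
                 lsum (fun gam => wcoef m f gam * HC gam e) (subsets (seq 0 m))).
  { intros e. unfold Gf.
    rewrite (Ev_sum d U P0 c eps Q0 Q1 _ f Psi (wcoef m f) (subsets (seq 0 m))).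
    2: { intros z. apply walsh_inv; auto. }
    apply lsum_ext; intros gam Hg. f_equal.
    assert (Hgn : NoDup gam) by (apply (subsets_nodup (seq 0 m) gam (seq_NoDup _ _) Hg)).
    assert (Hgi : incl gam (seq 0 m)) by (apply (subsets_incl (seq 0 m) gam Hg)).
    rewrite (Ev_link d U Rr P0 c eps Q0 Q1 m gam); auto.
    - unfold Pt. rewrite (lprod_ext _ (fun _ => 1)) by (intros; destruct (Nat.ltb_spec x 0); [lia|auto]).
      rewrite lprod_one, Rmult_1_l. unfold HC.
      apply (Hc_dep d U Rr P0 c eps Q0 Q1 gam (m - 1) 0 HU). intros y Hy.
      unfold tau. apply box_valid in Hy. unfold valid_site in Hy. rewrite <- Hy at 1.
      rewrite vadd_origin_l. auto.
    - intros s Hs'. apply Hgi in Hs'. apply in_seq in Hs'. lia.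
    - lia.
    - apply origin_in_box. }
  assert (Hdep : forall gam, gdep (box d (Rr * m)) (HC gam)).
  { intros gam. unfold HC. replace (Rr * m)%nat with (Rr * S (m - 1))%nat by (f_equal; lia).
    apply Hc_dep; auto. }
  split.
  - intros e e' E. rewrite !Egf. apply lsum_ext; intros gam _. f_equal. apply Hdep; auto.
  - rewrite normM_eq. rewrite (gnorm_ext site_eq_dec M _ _ _ Egf).
    eapply Rle_trans. apply gnorm_sumI. lra.
    rewrite (lsum_ext _ (fun gam => Rabs (wcoef m f gam) * gnorm site_eq_dec M (box d (Rr * m)) (HC gam)))
      by (intros; apply gnorm_scal).
    apply (Rle_trans _ (lsum (fun gam => maxcoef m f * ((alpha M mubar + 3) * sst M mubar ^ length gam)) (subsets (seq 0 m)))).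
    + apply lsum_le; intros gam Hg.
      assert (Hgn : NoDup gam) by (apply (subsets_nodup (seq 0 m) gam (seq_NoDup _ _) Hg)).
      assert (Hgi : incl gam (seq 0 m)) by (apply (subsets_incl (seq 0 m) gam Hg)).
      apply Rmult_le_compat.
      * apply Rabs_pos.
      * apply gnorm_nonneg. lra.
      * unfold maxcoef. apply fold_max_ge. apply in_map_iff. exists gam; auto.
      * pose proof (Inv_bound d M mubar piw HM Hmu _ _ _
          (Hc_Inv d U Rr P0 c eps Q0 Q1 M mubar piw HnU HU Hs HP1 HPe Hco HQ0 HQ1 HM Hmu Hpw0 Hpwc Hpwn Hinv Hcon gam (m - 1) 0)) as B.
        rewrite cnt_len in B by auto. unfold HC.
        replace (Rr * m)%nat with (Rr * S (m - 1))%nat by (f_equal; lia). exact B.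
    + rewrite lsum_scal, lsum_scal, subsets_pow, length_seq. unfold sst. lra.
Qed.
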